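(* Fix network data $(N,\mathcal S,R,f)$ satisfying the standing assumptions, $T>0$, $K>0$ and $\lambda\in\mathbb R_+^N$. Let $\mathcal X$ be the set of all sample paths of this switched network under the MW-$f$ policy. Let $\varepsilon_j\in\mathbb R_+$ and $\lambda^j\in\mathbb R_+^N$ be sequences indexed by $j$ in some totally ordered countable set with $\varepsilon_j\to0$ and $\lambda^j\to\lambda$. Let $G_j\subset C^I(T)\times[1,\infty)$ ($I=3N+|\mathcal S|$) be sets such that each $(\bar x,z)\in G_j$ is of the form: $\bar x$ is the fluid-scaled version with scaling parameter $z$ of some $X\in\mathcal X$ ($z$ may depend on $X$); and $\inf\{z:(\bar x,z)\in G_j\}\to\infty$ as $j\to\infty$; $\sup_{(\bar x,z)\in G_j}\sup_{t\in[0,T]}|\bar a(t)-\lambda^jt|\le\varepsilon_j$ for all $j$; $\sup_{(\bar x,z)\in G_j}|\bar q(0)|\le K$ for all $j$. Then $\sup_{(\bar x,z)\in G_j}d(\bar x,\mathrm{FMS}_K)\to0$ as $j\to\infty$. If moreover $q_0\in\mathbb R_+^N$ and $\varepsilon'_j\to0$ satisfy $\sup_{(\bar x,z)\in G_j}|\bar q(0)-q_0|\le\varepsilon'_j$ for all $j$, then $\sup_{(\bar x,z)\in G_j}d(\bar x,\mathrm{FMS}(q_0))\to0$.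
   Context: Norms: $|x|=\max_i|x_i|$; $C^I(T)$ is the space of continuous maps $[0,T]\to\mathbb R^I$ with $\|g\|=\sup_{t\in[0,T]}|g(t)|$, $d(g,h)=\|g-h\|$, $d(g,\mathcal E)=\inf_{h\in\mathcal E}d(g,h)$. Switched network: $N$ queues; finite schedule set $\mathcal S\subset\mathbb R_+^N$; routing matrix $R\in\{0,1\}^{N\times N}$ with at most one 1 per row, acyclic ($\tilde R=(I-R^T)^{-1}$ exists); $R=0$ is single-hop. A sample path $X=(Q,A,Y,S)$ in discrete time $\tau\in\{0,1,\dots\}$: $A(0)=0$, $A$ nondecreasing (cumulative exogenous arrivals); $B(0)=0$, $dB(\tau)=B(\tau+1)-B(\tau)\in\mathcal S$; $Y(0)=0$, $Y(\tau+1)-Y(\tau)=[dB(\tau)-Q(\tau)]^+$; $S_\pi(\tau)=\#\{\tau'<\tau:dB(\tau')=\pi\}$, so $B(\tau)=\sum_\pi S_\pi(\tau)\pi$; and $Q(\tau)=Q(0)+A(\tau)-(I-R^T)(B(\tau)-Y(\tau))$. MW-$f$ policy: $dB(\tau)\in\arg\max_{\pi\in\mathcal S}\pi\cdot(I-R)f(Q(\tau))$, $f$ componentwise. Standing assumptions: $f:\mathbb R_+\to\mathbb R_+$ differentiable, strictly increasing, $f(0)=0$, and if $\pi$ maximizes $\rho\mapsto\rho\cdot(I-R)f(q)$ over $\mathcal S$ then it maximizes $\rho\mapsto\rho\cdot(I-R)f(\kappa q)$ for every $\kappa\ge0$; in the multi-hop case also: $\pi\in\mathcal S$, $\rho_n\in\{0,\pi_n\}\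 \forall n$ implies $\rho\in\mathcal S$. Fluid scaling: extend $X$ to real time by linear interpolation; for $z\ge1$, $\bar x(t)=(\bar q,\bar a,\bar y,\bar s)(t)=(Q(zt),A(zt),Y(zt),S(zt))/z$, $t\in[0,T]$. Fluid model solution with arrival rate $\lambda$: $x=(q,a,y,s)\in C^I(T)$ with $q,a,y:[0,T]\to\mathbb R_+^N$, $s=(s_\pi)_{\pi\in\mathcal S}$, $s_\pi\ge0$, all components absolutely continuous, satisfying: $q(t)=q(0)+a(t)-(I-R^T)(\sum_\pi s_\pi(t)\pi-y(t))$; $a(t)=\lambda t$; $\sum_\pi s_\pi(t)=t$; $y(t)\le\sum_\pi s_\pi(t)\pi$; each $s_\pi$ and $y_n$ nondecreasing; at every time $t$ where they are differentiable, $\dot y_n(t)=0$ if $q_n(t)>0$, and $\dot s_\pi(t)=0$ if $\pi\cdot(I-R)f(q(t))<\max_{\rho\in\mathcal S}\rho\cdot(I-R)f(q(t))$. $\mathrm{FMS}$ is the set of these; $\mathrm{FMS}_K=\{x\in\mathrm{FMS}:|q(0)|\le K\}$; $\mathrm{FMS}(q_0)=\{x\in\mathrm{FMS}:q(0)=q_0\}$. *)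

(* Defs.v *)
From Stdlib Require Import Reals Lra Lia.
Open Scope R_scope.

Fixpoint fsum (m : nat) (F : nat -> R) : R :=
  match m with
  | O => 0
  | S m' => fsum m' F + F m'
  end.

Fixpoint cnt (sigma : nat -> nat) (k : nat) (tau : nat) : nat :=
  match tau with
  | O => O
  | S t => (cnt sigma k t + (if Nat.eqb (sigma t) k then 1 else 0))%nat
  end.

(* Vectors in R^N are functions nat -> R (only indices n < N matter).
   Schedules: sched k (k < M) is the k-th element pi_k of the finite
   schedule set S; M = |S|.  Routing matrix Rm n m = R_{nm}. *)

Definition weight (N : nat) (Rm : nat -> nat -> R) (f : R -> R)
  (pi q : nat -> R) : R :=
  fsum N (fun n => pi n * (f (q n) - fsum N (fun m => Rm n m * f (q m)))).

Definition IminusRT (N : nat) (Rm : nat -> nat -> R) (v : nat -> R) (n : nat) : R :=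
  v n - fsum N (fun m => Rm m n * v m).

Definition kdelta (i j : nat) : R := if Nat.eqb i j then 1 else 0.

Definition derivable_on_nonneg (f : R -> R) : Prop :=
  forall x, 0 <= x -> exists l, forall e, 0 < e -> exists d, 0 < d /\
    forall h, h <> 0 -> Rabs h < d -> 0 <= x + h ->
      Rabs ((f (x + h) - f x) / h - l) < e.

Definition network_ok (N M : nat) (sched : nat -> nat -> R)
  (Rm : nat -> nat -> R) (f : R -> R) : Prop :=
  (* S is a finite subset of R_+^N, listed without repetition *)
  (forall k n, (k < M)%nat -> (n < N)%nat -> 0 <= sched k n) /\
  (forall k l, (k < M)%nat -> (l < M)%nat -> k <> l ->
     exists n, (n < N)%nat /\ sched k n <> sched l n) /\
  (forall n m, (n < N)%nat -> (m < N)%nat -> Rm n m = 0 \/ Rm n m = 1) /\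
  (forall n m1 m2, (n < N)%nat -> (m1 < N)%nat -> (m2 < N)%nat ->
     Rm n m1 = 1 -> Rm n m2 = 1 -> m1 = m2) /\
  (* acyclic: (I - R^T)^{-1} exists *)
  (exists Rt : nat -> nat -> R, forall i j, (i < N)%nat -> (j < N)%nat ->
     fsum N (fun m => (kdelta i m - Rm m i) * Rt m j) = kdelta i j /\
     fsum N (fun m => Rt i m * (kdelta m j - Rm j m)) = kdelta i j) /\
  (forall x, 0 <= x -> 0 <= f x) /\
  derivable_on_nonneg f /\
  (forall x y, 0 <= x -> x < y -> f x < f y) /\
  f 0 = 0 /\
  (forall q : nat -> R, (forall n, (n < N)%nat -> 0 <= q n) ->
   forall k, (k < M)%nat ->
     (forall l, (l < M)%nat -> weight N Rm f (sched l) q <= weight N Rm f (sched k) q) ->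
     forall kappa, 0 <= kappa -> forall l, (l < M)%nat ->
       weight N Rm f (sched l) (fun n => kappa * q n)
         <= weight N Rm f (sched k) (fun n => kappa * q n)) /\
  (* multi-hop case: S closed under zeroing components *)
  ((exists n m, (n < N)%nat /\ (m < N)%nat /\ Rm n m <> 0) ->
     forall k, (k < M)%nat -> forall rho : nat -> R,
       (forall n, (n < N)%nat -> rho n = 0 \/ rho n = sched k n) ->
       exists l, (l < M)%nat /\ forall n, (n < N)%nat -> sched l n = rho n).

(* Discrete-time sample path X = (Q, A, Y, S): time -> component -> value.
   dS tau k = S_{pi_k}(tau). *)
Record dpath := mkdpath {
  dQ : nat -> nat -> R; dA : nat -> nat -> R;
  dY : nat -> nat -> R; dS : nat -> nat -> R }.

(* Sample path of the switched network under the MW-f policy;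
   sigma tau is the index k with dB(tau) = pi_k. *)
Definition is_MW_sample_path (N M : nat) (sched : nat -> nat -> R)
  (Rm : nat -> nat -> R) (f : R -> R) (X : dpath) : Prop :=
  exists sigma : nat -> nat,
    (forall tau, (sigma tau < M)%nat) /\
    (forall n, (n < N)%nat -> 0 <= dQ X 0%nat n) /\
    (forall n, (n < N)%nat -> dA X 0%nat n = 0) /\
    (forall tau n, (n < N)%nat -> dA X tau n <= dA X (S tau) n) /\
    (forall tau k, (k < M)%nat -> dS X tau k = INR (cnt sigma k tau)) /\
    (forall n, (n < N)%nat -> dY X 0%nat n = 0) /\
    (forall tau n, (n < N)%nat ->
       dY X (S tau) n - dY X tau n = Rmax 0 (sched (sigma tau) n - dQ X tau n)) /\
    (forall tau n, (n < N)%nat ->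
       dQ X tau n = dQ X 0%nat n + dA X tau n
         - IminusRT N Rm (fun m => fsum M (fun k => dS X tau k * sched k m)
                                   - dY X tau m) n) /\
    (forall tau l, (l < M)%nat ->
       weight N Rm f (sched l) (dQ X tau) <= weight N Rm f (sched (sigma tau)) (dQ X tau)).

(* Element of C^I(T): continuous-time path x = (q, a, y, s); only
   t in [0,T] and indices n < N, k < M matter. *)
Record fpath := mkfpath {
  fq : R -> nat -> R; fa : R -> nat -> R;
  fy : R -> nat -> R; fs : R -> nat -> R }.

Definition interp_at (g : nat -> R) (u v : R) : Prop :=
  forall k : nat, INR k <= u <= INR k + 1 ->
    v = g k + (u - INR k) * (g (S k) - g k).

Definition is_fluid_scaling (N M : nat) (T : R) (X : dpath) (z : R) (x : fpath) : Prop :=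
  forall t, 0 <= t <= T ->
    (forall n, (n < N)%nat ->
       interp_at (fun tau => dQ X tau n) (z * t) (z * fq x t n) /\
       interp_at (fun tau => dA X tau n) (z * t) (z * fa x t n) /\
       interp_at (fun tau => dY X tau n) (z * t) (z * fy x t n)) /\
    (forall k, (k < M)%nat ->
       interp_at (fun tau => dS X tau k) (z * t) (z * fs x t k)).

Definition dist_le (N M : nat) (T : R) (x h : fpath) (e : R) : Prop :=
  forall t, 0 <= t <= T ->
    (forall n, (n < N)%nat ->
       Rabs (fq x t n - fq h t n) <= e /\
       Rabs (fa x t n - fa h t n) <= e /\
       Rabs (fy x t n - fy h t n) <= e) /\
    (forall k, (k < M)%nat -> Rabs (fs x t k - fs h t k) <= e).

Definition abs_cont (g : R -> R) (a b : R) : Prop :=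
  forall e, 0 < e -> exists d, 0 < d /\
    forall (m : nat) (u v : nat -> R),
      (m > 0)%nat ->
      a <= u 0%nat ->
      (forall i, (i < m)%nat -> u i <= v i) ->
      (forall i, (S i < m)%nat -> v i <= u (S i)) ->
      v (pred m) <= b ->
      fsum m (fun i => v i - u i) < d ->
      fsum m (fun i => Rabs (g (v i) - g (u i))) < e.

Definition is_FMS (N M : nat) (sched : nat -> nat -> R) (Rm : nat -> nat -> R)
  (f : R -> R) (T : R) (lam : nat -> R) (x : fpath) : Prop :=
  (forall t n, 0 <= t <= T -> (n < N)%nat ->
     0 <= fq x t n /\ 0 <= fa x t n /\ 0 <= fy x t n) /\
  (forall t k, 0 <= t <= T -> (k < M)%nat -> 0 <= fs x t k) /\
  (forall n, (n < N)%nat ->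
     abs_cont (fun t => fq x t n) 0 T /\ abs_cont (fun t => fa x t n) 0 T /\
     abs_cont (fun t => fy x t n) 0 T) /\
  (forall k, (k < M)%nat -> abs_cont (fun t => fs x t k) 0 T) /\
  (forall t n, 0 <= t <= T -> (n < N)%nat ->
     fq x t n = fq x 0 n + fa x t n
       - IminusRT N Rm (fun m => fsum M (fun k => fs x t k * sched k m) - fy x t m) n) /\
  (forall t n, 0 <= t <= T -> (n < N)%nat -> fa x t n = lam n * t) /\
  (forall t, 0 <= t <= T -> fsum M (fun k => fs x t k) = t) /\
  (forall t n, 0 <= t <= T -> (n < N)%nat ->
     fy x t n <= fsum M (fun k => fs x t k * sched k n)) /\
  (forall t1 t2 k, 0 <= t1 -> t1 <= t2 -> t2 <= T -> (k < M)%nat ->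
     fs x t1 k <= fs x t2 k) /\
  (forall t1 t2 n, 0 <= t1 -> t1 <= t2 -> t2 <= T -> (n < N)%nat ->
     fy x t1 n <= fy x t2 n) /\
  (forall t n l, 0 < t < T -> (n < N)%nat ->
     derivable_pt_lim (fun u => fy x u n) t l -> 0 < fq x t n -> l = 0) /\
  (forall t k l, 0 < t < T -> (k < M)%nat ->
     derivable_pt_lim (fun u => fs x u k) t l ->
     (exists l', (l' < M)%nat /\
        weight N Rm f (sched k) (fq x t) < weight N Rm f (sched l') (fq x t)) ->
     l = 0).

Definition total_order {J : Type} (le : J -> J -> Prop) : Prop :=
  (forall a, le a a) /\ (forall a b, le a b -> le b a -> a = b) /\
  (forall a b c, le a b -> le b c -> le a c) /\ (forall a b, le a b \/ le b a).

Definition countable_type (J : Type) : Prop :=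
  exists enc : J -> nat, forall a b, enc a = enc b -> a = b.

Definition eventually {J : Type} (le : J -> J -> Prop) (P : J -> Prop) : Prop :=
  exists j0, forall j, le j0 j -> P j.

(* Main.v *)
From Stdlib Require Import Reals Lra Lia ZArith Classical ClassicalEpsilon.
Require Import Defs.
From Stdlib Require Import Reals.
Open Scope R_scope.

Lemma abs_le_iff : forall x e, Rabs x <= e <-> -e <= x <= e.
Proof. intros x e; unfold Rabs; destruct (Rcase_abs x); split; intros; lra. Qed.
Lemma abs_lt_iff : forall x e, Rabs x < e <-> -e < x < e.
Proof. intros x e; unfold Rabs; destruct (Rcase_abs x); split; intros; lra. Qed.

Lemma fsum_ext : forall m F G, (forall i, (i < m)%nat -> F i = G i) -> fsum m F = fsum m G.
Proof. induction m; intros F G H; simpl; auto. rewrite (IHm F G); [rewrite (H m)|]; auto; intros; apply H; lia. Qed.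

Lemma fsum_lin : forall m a b F G,
  fsum m (fun i => a * F i + b * G i) = a * fsum m F + b * fsum m G.
Proof. induction m; intros; simpl. ring. rewrite IHm; ring. Qed.

Lemma fsum_plus : forall m F G, fsum m (fun i => F i + G i) = fsum m F + fsum m G.
Proof. intros. rewrite <- (Rmult_1_l (fsum m F)), <- (Rmult_1_l (fsum m G)), <- fsum_lin.
  apply fsum_ext; intros; ring. Qed.
Lemma fsum_minus : forall m F G, fsum m (fun i => F i - G i) = fsum m F - fsum m G.
Proof. intros. replace (fsum m F - fsum m G) with (1 * fsum m F + (-1) * fsum m G) by ring.
  rewrite <- fsum_lin. apply fsum_ext; intros; ring. Qed.
Lemma fsum_scal : forall m a F, fsum m (fun i => a * F i) = a * fsum m F.
Proof. intros. replace (a * fsum m F) with (a * fsum m F + 0 * fsum m F) by ring.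
  rewrite <- fsum_lin. apply fsum_ext; intros; ring. Qed.
Lemma fsum_zero : forall m F, (forall i, (i < m)%nat -> F i = 0) -> fsum m F = 0.
Proof. induction m; intros; simpl; auto. rewrite IHm, H; auto; try lra; intros; apply H; lia. Qed.
Lemma fsum_le : forall m F G, (forall i, (i < m)%nat -> F i <= G i) -> fsum m F <= fsum m G.
Proof. induction m; intros; simpl. lra. assert (H1:=IHm F G). assert (H2:= H m). 
  assert (fsum m F <= fsum m G) by (apply H1; intros; apply H; lia). assert (F m <= G m) by (apply H2; lia). lra. Qed.
Lemma fsum_nonneg : forall m F, (forall i, (i < m)%nat -> 0 <= F i) -> 0 <= fsum m F.
Proof. intros. replace 0 with (fsum m (fun _ => 0)). apply fsum_le; auto. apply fsum_zero; auto. Qed.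
Lemma fsum_abs : forall m F, Rabs (fsum m F) <= fsum m (fun i => Rabs (F i)).
Proof. induction m; intros; simpl. rewrite Rabs_R0; lra.
  eapply Rle_trans. apply Rabs_triang. assert (H:=IHm F). lra. Qed.
Lemma fsum_const : forall m c, fsum m (fun _ => c) = INR m * c.
Proof. induction m; intros; simpl fsum. simpl; ring. rewrite IHm, S_INR; ring. Qed.
Lemma fsum_ind : forall m j F, (j < m)%nat ->
  fsum m (fun i => (if Nat.eqb j i then 1 else 0) * F i) = F j.
Proof. induction m; intros j F H. lia. simpl.
  destruct (Nat.eq_dec j m). subst. rewrite Nat.eqb_refl.
  rewrite fsum_zero. ring. intros i Hi. destruct (Nat.eqb_spec m i); [lia|ring].
  rewrite IHm by lia. destruct (Nat.eqb_spec j m); [lia|ring]. Qed.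

Lemma cnt_step : forall sigma k tau, INR (cnt sigma k (S tau)) - INR (cnt sigma k tau)
  = if Nat.eqb (sigma tau) k then 1 else 0.
Proof. intros; simpl cnt. rewrite plus_INR. destruct (Nat.eqb (sigma tau) k); simpl; ring. Qed.

Lemma cnt_sum : forall M sigma, (forall tau, (sigma tau < M)%nat) ->
  forall tau, fsum M (fun k => INR (cnt sigma k tau)) = INR tau.
Proof. intros M sigma Hs; induction tau. simpl. apply fsum_zero; intros; simpl; auto.
  replace (fsum M (fun k => INR (cnt sigma k (S tau)))) with
   (fsum M (fun k => INR (cnt sigma k tau) + (if Nat.eqb (sigma tau) k then 1 else 0) * 1)).
  rewrite fsum_plus, IHtau, fsum_ind, S_INR; auto; ring.
  apply fsum_ext; intros. rewrite <- cnt_step. ring. Qed.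

Lemma fsum_abs_le : forall m F c, (forall i, (i < m)%nat -> Rabs (F i) <= c) ->
  Rabs (fsum m F) <= INR m * c.
Proof. intros. eapply Rle_trans. apply fsum_abs. rewrite <- fsum_const. apply fsum_le; auto. Qed.

Lemma IminusRT_ext : forall N Rm v w n, (n < N)%nat -> (forall m, (m < N)%nat -> v m = w m) ->
  IminusRT N Rm v n = IminusRT N Rm w n.
Proof. intros; unfold IminusRT. rewrite H0 by auto. f_equal. apply fsum_ext; intros. rewrite H0; auto. Qed.
Lemma IminusRT_lin : forall N Rm a b v w n,
  IminusRT N Rm (fun m => a * v m + b * w m) n = a * IminusRT N Rm v n + b * IminusRT N Rm w n.
Proof. intros; unfold IminusRT.
  replace (fsum N (fun m => Rm m n * (a * v m + b * w m))) with
   (fsum N (fun m => a * (Rm m n * v m) + b * (Rm m n * w m))) by (apply fsum_ext; intros; ring).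
  rewrite fsum_lin. ring. Qed.
Lemma IminusRT_bound : forall N Rm v n c,
  (forall m, (m < N)%nat -> 0 <= Rm m n <= 1) -> (n < N)%nat ->
  (forall m, (m < N)%nat -> Rabs (v m) <= c) ->
  Rabs (IminusRT N Rm v n) <= (1 + INR N) * c.
Proof. intros. unfold IminusRT. assert (Hc : 0 <= c) by (eapply Rle_trans; [apply Rabs_pos| apply (H1 n H0)]).
  assert (Rabs (fsum N (fun m => Rm m n * v m)) <= INR N * c).
  apply fsum_abs_le. intros. rewrite Rabs_mult. specialize (H i H2). specialize (H1 i H2).
  rewrite (Rabs_right (Rm i n)) by lra. assert (0 <= Rabs (v i)) by apply Rabs_pos. nra.
  eapply Rle_trans. unfold Rminus. apply Rabs_triang. rewrite Rabs_Ropp. specialize (H1 n H0). lra. Qed.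

Lemma floor_ex : forall u, 0 <= u -> exists k : nat, INR k <= u < INR k + 1.
Proof. intros u Hu. destruct (archimed u) as [H1 H2].
  assert (Hz : (0 <= up u - 1)%Z). { assert (0 < IZR (up u)) by lra. apply lt_0_IZR in H. lia. }
  exists (Z.to_nat (up u - 1)). rewrite INR_IZR_INZ, Z2Nat.id by auto. rewrite minus_IZR. lra. Qed.

Lemma interp_nat : forall g (k : nat) v, interp_at g (INR k) v -> v = g k.
Proof. intros. rewrite (H k) by lra. ring. Qed.

Lemma interp_val : forall g u v, 0 <= u -> interp_at g u v ->
  exists k : nat, INR k <= u < INR k + 1 /\ v = g k + (u - INR k) * (g (S k) - g k).
Proof. intros. destruct (floor_ex u H) as [k Hk]. exists k. split; auto. apply H0; lra. Qed.

Lemma incr_bound : forall g L, (forall k, 0 <= g (S k) - g k <= L) ->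
  forall k j, (k <= j)%nat -> 0 <= g j - g k <= L * (INR j - INR k).
Proof. intros g L H k j Hkj. induction Hkj. split; ring_simplify; lra.
  rewrite S_INR. specialize (H m). lra. Qed.

Lemma interp_lip : forall g L, (forall k, 0 <= g (S k) - g k <= L) ->
  forall u u' v v', 0 <= u -> u <= u' -> interp_at g u v -> interp_at g u' v' ->
  0 <= v' - v <= L * (u' - u).
Proof. intros g L H u u' v v' Hu Huu' Hv Hv'.
  destruct (interp_val g u v Hu Hv) as [k [Hk ->]].
  destruct (interp_val g u' v' ltac:(lra) Hv') as [j [Hj ->]].
  destruct (le_lt_dec j k).
  - assert (j = k). { assert (k < S j)%nat by (apply INR_lt; rewrite S_INR; lra). lia. } subst.
    specialize (H k). split; nra.
  - assert (Hb := incr_bound g L H (S k) j l). rewrite S_INR in Hb. pose proof (H k). pose proof (H j). nra.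
Qed.

Lemma const_run : forall (g : nat -> R) k j, (k <= j)%nat ->
  (forall t, (k <= t < j)%nat -> g (S t) = g t) -> g j = g k.
Proof. intros g k j Hkj; induction Hkj; intros; auto. rewrite H by lia. apply IHHkj; intros; apply H; lia. Qed.

Lemma interp_const : forall g a b u u' v v', 0 <= a ->
  (forall t : nat, a - 1 < INR t <= b -> g (S t) = g t) ->
  a <= u <= b -> a <= u' <= b -> interp_at g u v -> interp_at g u' v' -> v = v'.
Proof. intros g a b u u' v v' Ha H Hu Hu' Hv Hv'.
  destruct (interp_val g u v ltac:(lra) Hv) as [k [Hk ->]].
  destruct (interp_val g u' v' ltac:(lra) Hv') as [j [Hj ->]].
  rewrite (H k), (H j) by lra. ring_simplify.
  assert (forall k j, (k <= j)%nat -> a < INR k + 1 -> INR j <= b -> g j = g k).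
  { intros k0 j0 Hkj Hk0 Hj0. apply const_run; auto. intros t Ht. apply H.
    assert (INR k0 <= INR t) by (apply le_INR; lia). assert (INR t < INR j0) by (apply lt_INR; lia). lra. }
  destruct (le_lt_dec k j). symmetry; apply H0; auto; lra. apply H0; [lia|lra|lra]. Qed.

Lemma fsum_ge_term : forall m F j, (forall i, (i < m)%nat -> 0 <= F i) -> (j < m)%nat -> F j <= fsum m F.
Proof. induction m; intros. lia. simpl. destruct (Nat.eq_dec j m). subst.
  assert (0 <= fsum m F) by (apply fsum_nonneg; intros; apply H; lia). lra.
  assert (F j <= fsum m F) by (apply IHm; auto; try lia; intros; apply H; lia). specialize (H m). assert (0 <= F m) by (apply H; lia). lra. Qed.

Definition Lsch (N M : nat) (sched : nat -> nat -> R) : R :=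
  1 + fsum M (fun k => fsum N (fun n => sched k n)).

Lemma Lsch_bound : forall N M sched, (forall k n, (k < M)%nat -> (n < N)%nat -> 0 <= sched k n) ->
  forall k n, (k < M)%nat -> (n < N)%nat -> 0 <= sched k n <= Lsch N M sched - 1.
Proof. intros. unfold Lsch. split; auto. ring_simplify.
  eapply Rle_trans. apply (fsum_ge_term N (fun n => sched k n) n); auto.
  apply (fsum_ge_term M (fun k => fsum N (fun n => sched k n)) k); auto.
  intros; apply fsum_nonneg; auto. Qed.

Lemma Lsch_pos : forall N M sched, (forall k n, (k < M)%nat -> (n < N)%nat -> 0 <= sched k n) ->
  1 <= Lsch N M sched.
Proof. intros. unfold Lsch. assert (0 <= fsum M (fun k => fsum N (fun n => sched k n))).
  apply fsum_nonneg; intros; apply fsum_nonneg; auto. lra. Qed.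

Lemma Rm01 : forall N M sched Rm f, network_ok N M sched Rm f ->
  forall n m, (n < N)%nat -> (m < N)%nat -> 0 <= Rm n m <= 1.
Proof. intros N M sched Rm f Hok n m Hn Hm. destruct Hok as [_ [_ [H _]]].
  destruct (H n m Hn Hm) as [-> | ->]; lra. Qed.

Lemma mw_facts : forall N M sched Rm f X, network_ok N M sched Rm f ->
  is_MW_sample_path N M sched Rm f X ->
  exists sigma : nat -> nat,
    (forall tau, (sigma tau < M)%nat) /\
    (forall tau l, (l < M)%nat ->
       weight N Rm f (sched l) (dQ X tau) <= weight N Rm f (sched (sigma tau)) (dQ X tau)) /\
    (forall tau n, (n < N)%nat -> 0 <= dQ X tau n) /\
    (forall tau n, (n < N)%nat -> 0 <= dY X (S tau) n - dY X tau n <= Lsch N M sched) /\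
    (forall tau k, (k < M)%nat -> 0 <= dS X (S tau) k - dS X tau k <= Lsch N M sched) /\
    (forall tau n, (n < N)%nat -> dY X tau n <= fsum M (fun k => dS X tau k * sched k n)) /\
    (forall tau, fsum M (fun k => dS X tau k) = INR tau) /\
    (forall n, (n < N)%nat -> dY X 0 n = 0) /\
    (forall k, (k < M)%nat -> dS X 0 k = 0) /\
    (forall tau n, (n < N)%nat -> sched (sigma tau) n <= dQ X tau n -> dY X (S tau) n = dY X tau n) /\
    (forall tau k, (k < M)%nat -> sigma tau <> k -> dS X (S tau) k = dS X tau k) /\
    (forall tau n, (n < N)%nat ->
       dQ X tau n = dQ X 0%nat n + dA X tau n
         - IminusRT N Rm (fun m => fsum M (fun k => dS X tau k * sched k m) - dY X tau m) n).
Proof.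
  intros N M sched Rm f X Hok HX.
  pose proof (Rm01 _ _ _ _ _ Hok) as HR.
  pose proof Hok as [Hsch _].
  pose proof (Lsch_bound N M sched Hsch) as HL.
  destruct HX as [sigma [Hsig [HQ0 [HA0 [HAinc [HS [HY0 [HY [HQ HMW]]]]]]]]].
  assert (HdS : forall tau k, (k < M)%nat -> dS X (S tau) k - dS X tau k = if Nat.eqb (sigma tau) k then 1 else 0).
  { intros. rewrite !HS by auto. apply cnt_step. }
  assert (HdB : forall tau m, fsum M (fun k => dS X (S tau) k * sched k m) - fsum M (fun k => dS X tau k * sched k m) = sched (sigma tau) m).
  { intros. rewrite <- fsum_minus. rewrite <- (fsum_ind M (sigma tau) (fun k => sched k m)) by auto.
    apply fsum_ext; intros. rewrite <- HdS by auto. ring. }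
  assert (HQpos : forall tau n, (n < N)%nat -> 0 <= dQ X tau n).
  { induction tau. auto.
    intros n Hn.
    assert (E : dQ X (S tau) n = dQ X tau n + (dA X (S tau) n - dA X tau n)
       - IminusRT N Rm (fun m => sched (sigma tau) m - Rmax 0 (sched (sigma tau) m - dQ X tau m)) n).
    { rewrite (HQ (S tau)), (HQ tau) by auto.
      set (V1 := fun m => fsum M (fun k => dS X (S tau) k * sched k m) - dY X (S tau) m).
      set (V0 := fun m => fsum M (fun k => dS X tau k * sched k m) - dY X tau m).
      rewrite (IminusRT_ext N Rm (fun m => sched (sigma tau) m - Rmax 0 (sched (sigma tau) m - dQ X tau m))
                 (fun m => 1 * V1 m + (-1) * V0 m)) by (auto; intros; unfold V1, V0; pose proof (HdB tau m); pose proof (HY tau m H); lra).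
      rewrite IminusRT_lin. ring. }
    rewrite E. unfold IminusRT.
    set (w := fun m => sched (sigma tau) m - Rmax 0 (sched (sigma tau) m - dQ X tau m)).
    assert (Hw : forall m, (m < N)%nat -> 0 <= w m <= dQ X tau m).
    { intros m Hm. unfold w. pose proof (IHtau m Hm). pose proof (HL (sigma tau) m (Hsig tau) Hm).
      unfold Rmax; destruct (Rle_dec 0 (sched (sigma tau) m - dQ X tau m)); lra. }
    assert (0 <= fsum N (fun m => Rm m n * w m)).
    { apply fsum_nonneg; intros. pose proof (HR i n H Hn). pose proof (Hw i H). nra. }
    pose proof (HAinc tau n Hn). pose proof (Hw n Hn). unfold w in H, H1. lra. }
  exists sigma. split; [auto|]. split; [auto|]. split; [auto|].
  split. { intros. rewrite HY by auto. pose proof (HQpos tau n H). pose proof (HL (sigma tau) n (Hsig tau) H).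
    unfold Rmax; destruct (Rle_dec 0 (sched (sigma tau) n - dQ X tau n)); lra. }
  split. { intros. rewrite HdS by auto. pose proof (Lsch_pos N M sched Hsch). destruct (Nat.eqb (sigma tau) k); lra. }
  split. { induction tau. intros. rewrite HY0 by auto. apply fsum_nonneg; intros. rewrite HS by auto. simpl. lra.
    intros n Hn. pose proof (HdB tau n). pose proof (HY tau n Hn). pose proof (IHtau n Hn). pose proof (HQpos tau n Hn).
    assert (Rmax 0 (sched (sigma tau) n - dQ X tau n) <= sched (sigma tau) n).
    { pose proof (HL (sigma tau) n (Hsig tau) Hn). unfold Rmax; destruct (Rle_dec 0 (sched (sigma tau) n - dQ X tau n)); lra. }
    lra. }
  split. { intros. rewrite <- (cnt_sum M sigma Hsig tau). apply fsum_ext; intros; auto. }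
  split; [auto|].
  split. { intros. rewrite HS by auto. simpl; auto. }
  split. { intros. pose proof (HY tau n H). unfold Rmax in H1; destruct (Rle_dec 0 (sched (sigma tau) n - dQ X tau n)); lra. }
  split. { intros. pose proof (HdS tau k H). destruct (Nat.eqb_spec (sigma tau) k); [contradiction|lra]. }
  auto.
Qed.

Lemma fsum_interp : forall m (c a b : nat -> R) th,
  fsum m (fun j => c j * (a j + th * (b j - a j))) =
  fsum m (fun j => c j * a j) + th * (fsum m (fun j => c j * b j) - fsum m (fun j => c j * a j)).
Proof. intros. rewrite <- fsum_minus, <- fsum_scal, <- fsum_plus. apply fsum_ext; intros; ring. Qed.

Lemma fluid_facts : forall N M sched Rm f T X z x,
  network_ok N M sched Rm f -> is_MW_sample_path N M sched Rm f X ->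
  is_fluid_scaling N M T X z x -> 1 <= z ->
  (forall t n, 0 <= t <= T -> (n < N)%nat -> 0 <= fq x t n) /\
  (forall t t' n, 0 <= t -> t <= t' -> t' <= T -> (n < N)%nat ->
     0 <= fy x t' n - fy x t n <= Lsch N M sched * (t' - t)) /\
  (forall t t' k, 0 <= t -> t <= t' -> t' <= T -> (k < M)%nat ->
     0 <= fs x t' k - fs x t k <= Lsch N M sched * (t' - t)) /\
  (0 <= T -> forall n, (n < N)%nat -> fy x 0 n = 0) /\
  (0 <= T -> forall k, (k < M)%nat -> fs x 0 k = 0) /\
  (forall t n, 0 <= t <= T -> (n < N)%nat -> fy x t n <= fsum M (fun k => fs x t k * sched k n)) /\
  (forall t, 0 <= t <= T -> fsum M (fun k => fs x t k) = t) /\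
  (forall t n, 0 <= t <= T -> (n < N)%nat ->
     fq x t n = fq x 0 n + fa x t n
       - IminusRT N Rm (fun m => fsum M (fun k => fs x t k * sched k m) - fy x t m) n).
Proof.
  intros N M sched Rm f T X z x Hok HX Hfl Hz.
  destruct (mw_facts N M sched Rm f X Hok HX) as
    [sigma [Hsig [HMW [HQpos [HYinc [HSinc [HYB [HSsum [HY0 [HS0 [_ [_ HQ]]]]]]]]]]]].
  assert (Hz0 : 0 < z) by lra.
  split.
  { intros t n Ht Hn. destruct (Hfl t Ht) as [H1 _]. destruct (H1 n Hn) as [Hq _].
    destruct (interp_val _ (z*t) _ (Rmult_le_pos z t ltac:(lra) ltac:(lra)) Hq) as [k [Hk E]].
    pose proof (HQpos k n Hn). pose proof (HQpos (S k) n Hn).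
    assert (0 <= z * fq x t n) by (rewrite E; nra). nra. }
  split.
  { intros t t' n H0 H1 H2 Hn. destruct (Hfl t ltac:(lra)) as [Ha _]. destruct (Hfl t' ltac:(lra)) as [Hb _].
    destruct (Ha n Hn) as [_ [_ Hy]]. destruct (Hb n Hn) as [_ [_ Hy']].
    pose proof (interp_lip _ _ (fun k => HYinc k n Hn) (z*t) (z*t') _ _ (Rmult_le_pos z t ltac:(lra) ltac:(lra)) (Rmult_le_compat_l z t t' ltac:(lra) ltac:(lra)) Hy Hy').
    split; nra. }
  split.
  { intros t t' k H0 H1 H2 Hk. destruct (Hfl t ltac:(lra)) as [_ Ha]. destruct (Hfl t' ltac:(lra)) as [_ Hb].
    pose proof (interp_lip _ _ (fun j => HSinc j k Hk) (z*t) (z*t') _ _ (Rmult_le_pos z t ltac:(lra) ltac:(lra)) (Rmult_le_compat_l z t t' ltac:(lra) ltac:(lra)) (Ha k Hk) (Hb k Hk)).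
    split; nra. }
  split.
  { intros HT n Hn. destruct (Hfl 0 ltac:(lra)) as [Ha _]. destruct (Ha n Hn) as [_ [_ Hy]].
    rewrite Rmult_0_r in Hy. apply (interp_nat _ 0) in Hy. rewrite HY0 in Hy by auto. nra. }
  split.
  { intros HT k Hk. destruct (Hfl 0 ltac:(lra)) as [_ Ha]. specialize (Ha k Hk).
    rewrite Rmult_0_r in Ha. apply (interp_nat _ 0) in Ha. rewrite HS0 in Ha by auto. nra. }
  assert (Hfl2 : forall t, 0 <= t <= T -> exists k : nat, exists th, 0 <= th <= 1 /\ z * t = INR k + th /\
     (forall n, (n < N)%nat ->
       z * fq x t n = dQ X k n + th * (dQ X (S k) n - dQ X k n) /\
       z * fa x t n = dA X k n + th * (dA X (S k) n - dA X k n) /\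
       z * fy x t n = dY X k n + th * (dY X (S k) n - dY X k n)) /\
     (forall j, (j < M)%nat -> z * fs x t j = dS X k j + th * (dS X (S k) j - dS X k j))).
  { intros t Ht. destruct (floor_ex (z * t) (Rmult_le_pos z t ltac:(lra) ltac:(lra))) as [k Hk]. exists k, (z * t - INR k).
    split; [lra|]. split; [ring|]. destruct (Hfl t Ht) as [H1 H2]. split.
    intros n Hn. destruct (H1 n Hn) as [A [B C]]. repeat split; [apply A|apply B|apply C]; lra.
    intros j Hj. apply (H2 j Hj); lra. }
  split.
  { intros t n Ht Hn. destruct (Hfl2 t Ht) as [k [th [Hth [Ezt [H1 H2]]]]].
    destruct (H1 n Hn) as [_ [_ Ey]].
    assert (E : z * fsum M (fun j => fs x t j * sched j n) =
       fsum M (fun j => sched j n * (dS X k j + th * (dS X (S k) j - dS X k j)))).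
    { rewrite <- fsum_scal. apply fsum_ext; intros. rewrite <- H2 by auto. ring. }
    rewrite fsum_interp in E.
    pose proof (HYB k n Hn). pose proof (HYB (S k) n Hn).
    assert (fsum M (fun j => sched j n * dS X k j) = fsum M (fun j => dS X k j * sched j n)) by (apply fsum_ext; intros; ring).
    assert (fsum M (fun j => sched j n * dS X (S k) j) = fsum M (fun j => dS X (S k) j * sched j n)) by (apply fsum_ext; intros; ring).
    assert (z * fy x t n <= z * fsum M (fun j => fs x t j * sched j n)) by nra. nra. }
  split.
  { intros t Ht. destruct (Hfl2 t Ht) as [k [th [Hth [Ezt [H1 H2]]]]].
    assert (E : z * fsum M (fun j => fs x t j) =
       fsum M (fun j => 1 * (dS X k j + th * (dS X (S k) j - dS X k j)))).
    { rewrite <- fsum_scal. apply fsum_ext; intros. rewrite <- H2 by auto. ring. }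
    rewrite fsum_interp in E.
    rewrite (fsum_ext M (fun j => 1 * dS X k j) (fun j => dS X k j)), (fsum_ext M (fun j => 1 * dS X (S k) j) (fun j => dS X (S k) j)) in E by (intros; ring).
    rewrite !HSsum, S_INR in E. nra. }
  { intros t n Ht Hn.
    assert (Hq0 : z * fq x 0 n = dQ X 0 n).
    { destruct (Hfl 0 ltac:(lra)) as [Ha _]. destruct (Ha n Hn) as [Hq _].
      rewrite Rmult_0_r in Hq. apply (interp_nat _ 0) in Hq. auto. }
    destruct (Hfl2 t Ht) as [k [th [Hth [Ezt [H1 H2]]]]].
    destruct (H1 n Hn) as [Eq [Ea _]].
    set (V := fun tau m => fsum M (fun j => dS X tau j * sched j m) - dY X tau m).
    assert (EI : z * IminusRT N Rm (fun m => fsum M (fun k => fs x t k * sched k m) - fy x t m) n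
      = (1 - th) * IminusRT N Rm (V k) n + th * IminusRT N Rm (V (S k)) n).
    { rewrite <- IminusRT_lin. replace (z * IminusRT N Rm (fun m => fsum M (fun k => fs x t k * sched k m) - fy x t m) n)
        with (z * IminusRT N Rm (fun m => fsum M (fun k => fs x t k * sched k m) - fy x t m) n + 0 * IminusRT N Rm (fun _ => 0) n) by ring.
      rewrite <- IminusRT_lin. apply IminusRT_ext; auto. intros m Hm.
      destruct (H1 m Hm) as [_ [_ Ey]]. unfold V.
      assert (E : z * fsum M (fun j => fs x t j * sched j m) =
       fsum M (fun j => sched j m * (dS X k j + th * (dS X (S k) j - dS X k j)))).
      { rewrite <- fsum_scal. apply fsum_ext; intros. rewrite <- H2 by auto. ring. }
      rewrite fsum_interp in E.
      assert (fsum M (fun j => sched j m * dS X k j) = fsum M (fun j => dS X k j * sched j m)) by (apply fsum_ext; intros; ring).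
      assert (fsum M (fun j => sched j m * dS X (S k) j) = fsum M (fun j => dS X (S k) j * sched j m)) by (apply fsum_ext; intros; ring).
      nra. }
    pose proof (HQ k n Hn). pose proof (HQ (S k) n Hn). fold (V k) in H. fold (V (S k)) in H0.
    assert (z * fq x t n = z * (fq x 0 n + fa x t n - IminusRT N Rm (fun m => fsum M (fun k => fs x t k * sched k m) - fy x t m) n)).
    { rewrite Rmult_minus_distr_l, Rmult_plus_distr_l, EI, Hq0, Eq, Ea, H, H0. ring. }
    apply Rmult_eq_reg_l in H3; lra. }
Qed.

Lemma choice_fun : forall {A B : Type} (P : A -> B -> Prop),
  (forall a, exists b, P a b) -> exists g : A -> B, forall a, P a (g a).
Proof. intros A B P H. exists (fun a => proj1_sig (constructive_indefinite_description _ (H a))).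
  intros a. exact (proj2_sig (constructive_indefinite_description _ (H a))). Qed.

Lemma nat_above : forall x, exists n : nat, x <= INR n.
Proof. intros. destruct (floor_ex (Rmax 0 x) (Rmax_l _ _)) as [k Hk]. exists (S k). rewrite S_INR.
  pose proof (Rmax_r 0 x). lra. Qed.

Lemma small_inv : forall c e, 0 < e -> exists m : nat, c / (INR m + 1) <= e.
Proof. intros c e He. destruct (nat_above (c / e)) as [m Hm]. exists m.
  assert (0 < INR m + 1) by (pose proof (pos_INR m); lra).
  apply (Rmult_le_reg_r (INR m + 1)); auto. unfold Rdiv. rewrite Rmult_assoc, Rinv_l by lra.
  apply (Rmult_le_compat_r e) in Hm; [|lra]. unfold Rdiv in Hm. rewrite Rmult_assoc, Rinv_l in Hm by lra. nra. Qed.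

Definition infs (S : nat -> Prop) : Prop := forall n, exists k, (n <= k)%nat /\ S k.

Lemma split_inf : forall S P, infs S -> infs (fun k => S k /\ P k) \/ infs (fun k => S k /\ ~ P k).
Proof. intros S P H. destruct (classic (infs (fun k => S k /\ P k))) as [H1|H1]; [left; auto|right].
  apply not_all_ex_not in H1. destruct H1 as [n0 H1]. intros n. destruct (H (Nat.max n n0)) as [k [Hk Sk]].
  exists k. split; [lia|]. split; auto. intros Pk. apply H1. exists k. split; [lia|auto]. Qed.

Lemma bin_lemma : forall (n : nat) a d (g : nat -> R) S, 0 < d -> infs S ->
  (forall k, S k -> a <= g k <= a + INR n * d) ->
  exists b, infs (fun k => S k /\ b <= g k <= b + d).
Proof. induction n; intros a d g S Hd HS Hg.
  - exists a. intros m. destruct (HS m) as [k [Hk Sk]]. exists k. split; auto. split; auto.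
    specialize (Hg k Sk). simpl in Hg. lra.
  - destruct (split_inf S (fun k => g k <= a + d) HS) as [H|H].
    + exists a. intros m. destruct (H m) as [k [Hk [Sk Pk]]]. exists k. split; auto. split; auto.
      specialize (Hg k Sk). lra.
    + destruct (IHn (a + d) d g _ Hd H) as [b Hb].
      { intros k [Sk Pk]. specialize (Hg k Sk). rewrite S_INR in Hg. lra. }
      exists b. intros m. destruct (Hb m) as [k [Hk [[Sk _] Hg2]]]. exists k. auto.
Qed.

Lemma refine1 : forall (P : nat) (g : nat -> nat -> R) (S : nat -> Prop) d C, 0 < d -> infs S ->
  (forall k i, S k -> (i < P)%nat -> Rabs (g i k) <= C) ->
  exists S' : nat -> Prop, (forall k, S' k -> S k) /\ infs S' /\
    forall k k' i, S' k -> S' k' -> (i < P)%nat -> Rabs (g i k - g i k') <= d.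
Proof. induction P; intros g S d C Hd HS Hb.
  - exists S. repeat split; auto. intros; lia.
  - destruct (IHP g S d C Hd HS) as [S1 [H1 [H2 H3]]]. { intros; apply Hb; auto; lia. }
    destruct (nat_above (2 * C / d)) as [n Hn].
    destruct (bin_lemma n (-C) d (g P) S1 Hd H2) as [b Hbin].
    { intros k Sk. specialize (Hb k P (H1 k Sk) ltac:(lia)). apply abs_le_iff in Hb.
      assert (2 * C <= INR n * d). { apply (Rmult_le_compat_r d) in Hn; [|lra]. unfold Rdiv in Hn.
        rewrite Rmult_assoc, Rinv_l in Hn by lra. lra. } lra. }
    exists (fun k => S1 k /\ b <= g P k <= b + d). split. intros k [Sk _]; auto. split; auto.
    intros k k' i [Sk Hk] [Sk' Hk'] Hi. destruct (Nat.eq_dec i P). subst. apply abs_le_iff. lra.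
    apply H3; auto; lia.
Qed.

Section Compact.
Variable (P : nat) (F : nat -> nat -> R -> R) (T C L : R).
Hypothesis HT : 0 < T.
Hypothesis HL : 0 <= L.
Hypothesis Hbd : forall k i t, (i < P)%nat -> 0 <= t <= T -> Rabs (F k i t) <= C.
Hypothesis Hlip : forall k i t t', (i < P)%nat -> 0 <= t <= T -> 0 <= t' <= T ->
   Rabs (F k i t - F k i t') <= L * Rabs (t - t').

Definition grid (m p : nat) : R := T * INR p / (INR m + 1).

Lemma grid_in : forall m p, (p <= S m)%nat -> 0 <= grid m p <= T.
Proof. intros. unfold grid. assert (0 < INR m + 1) by (pose proof (pos_INR m); lra).
  assert (0 <= INR p <= INR m + 1) by (split; [apply pos_INR| rewrite <- S_INR; apply le_INR; auto]).
  split. apply Rmult_le_pos; [nra| apply Rlt_le, Rinv_0_lt_compat; auto].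
  apply (Rmult_le_reg_r (INR m + 1)); auto. unfold Rdiv. rewrite Rmult_assoc, Rinv_l by lra. nra. Qed.

Lemma grid_near : forall m t, 0 <= t <= T -> exists p, (p <= S m)%nat /\ Rabs (t - grid m p) <= T / (INR m + 1).
Proof. intros m t Ht. assert (Hm : 0 < INR m + 1) by (pose proof (pos_INR m); lra).
  assert (H0 : 0 <= t * (INR m + 1) / T) by (apply Rmult_le_pos; [nra| apply Rlt_le, Rinv_0_lt_compat; auto]).
  destruct (floor_ex _ H0) as [p Hp]. exists p.
  assert (E : forall y, y * (INR m + 1) / T * T / (INR m + 1) = y) by (intros; field; lra).
  assert (Hg : grid m p = INR p * T / (INR m + 1)) by (unfold grid; field; lra).
  assert (HpT : INR p <= INR m + 1).
  { apply (Rmult_le_reg_r (T / (INR m + 1))). apply Rdiv_lt_0_compat; lra.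
    replace ((INR m + 1) * (T / (INR m + 1))) with T by (field; lra).
    apply Rle_trans with (t * (INR m + 1) / T * (T / (INR m + 1))). apply Rmult_le_compat_r. apply Rlt_le, Rdiv_lt_0_compat; lra. lra.
    replace (t * (INR m + 1) / T * (T / (INR m + 1))) with t by (field; lra). lra. }
  split. apply INR_le. rewrite S_INR; lra.
  rewrite Hg. apply abs_le_iff.
  assert (Hp2 : INR p * (T / (INR m + 1)) <= t < (INR p + 1) * (T / (INR m + 1))).
  { destruct Hp as [Hp1 Hp2]. split.
    - apply Rle_trans with (t * (INR m + 1) / T * (T / (INR m + 1))). apply Rmult_le_compat_r. apply Rlt_le, Rdiv_lt_0_compat; lra. lra.
      right; field; lra.
    - apply Rle_lt_trans with (t * (INR m + 1) / T * (T / (INR m + 1))). right; field; lra.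
      apply Rmult_lt_compat_r. apply Rdiv_lt_0_compat; lra. lra. }
  replace (INR p * T / (INR m + 1)) with (INR p * (T / (INR m + 1))) by (field; lra). lra.
Qed.

Lemma refine2 : forall m (Q : nat) (Sx : nat -> Prop) d, (Q <= S (S m))%nat -> 0 < d -> infs Sx ->
  exists S' : nat -> Prop, (forall k, S' k -> Sx k) /\ infs S' /\
    forall k k' i p, S' k -> S' k' -> (i < P)%nat -> (p < Q)%nat ->
      Rabs (F k i (grid m p) - F k' i (grid m p)) <= d.
Proof. intros m Q; induction Q; intros Sx d HQ Hd HS.
  - exists Sx. repeat split; auto. intros; lia.
  - destruct (IHQ Sx d ltac:(lia) Hd HS) as [S1 [H1 [H2 H3]]].
    destruct (refine1 P (fun i k => F k i (grid m Q)) S1 d C Hd H2) as [S2 [H4 [H5 H6]]].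
    { intros. apply Hbd; auto. apply grid_in; lia. }
    exists S2. split; auto. split; auto. intros k k' i p Sk Sk' Hi Hp.
    destruct (Nat.eq_dec p Q). subst. apply H6; auto. apply H3; auto; lia.
Qed.

Lemma level : forall m (Sx : nat -> Prop), infs Sx ->
  exists S' : nat -> Prop, (forall k, S' k -> Sx k) /\ infs S' /\
    forall k k' i t, S' k -> S' k' -> (i < P)%nat -> 0 <= t <= T ->
      Rabs (F k i t - F k' i t) <= (2 * L * T + 1) / (INR m + 1).
Proof. intros m Sx HS. assert (Hm : 0 < INR m + 1) by (pose proof (pos_INR m); lra).
  destruct (refine2 m (S (S m)) Sx (1 / (INR m + 1)) ltac:(lia) ltac:(apply Rdiv_lt_0_compat; lra) HS) as [S1 [H1 [H2 H3]]].
  exists S1. split; auto. split; auto. intros k k' i t Sk Sk' Hi Ht.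
  destruct (grid_near m t Ht) as [p [Hp Hd]].
  pose proof (grid_in m p Hp) as Hg.
  pose proof (Hlip k i t (grid m p) Hi Ht Hg). pose proof (Hlip k' i t (grid m p) Hi Ht Hg).
  pose proof (H3 k k' i p Sk Sk' Hi ltac:(lia)).
  assert (E : (2 * L * T + 1) / (INR m + 1) = 2 * (L * (T / (INR m + 1))) + 1 / (INR m + 1)) by (field; lra).
  rewrite E. assert (L * Rabs (t - grid m p) <= L * (T / (INR m + 1))) by (apply Rmult_le_compat_l; auto).
  apply abs_le_iff in H, H0, H4. apply abs_le_iff. lra.
Qed.

Lemma compactness : exists phi : nat -> nat, (forall k, (phi k < phi (S k))%nat) /\
  exists Fh : nat -> R -> R, forall e, 0 < e -> exists k0, forall k, (k0 <= k)%nat ->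
    forall i t, (i < P)%nat -> 0 <= t <= T -> Rabs (F (phi k) i t - Fh i t) <= e.
Proof.
  destruct (choice_fun (fun (mS : nat * (nat -> Prop)) S' => infs (snd mS) -> (forall k, S' k -> snd mS k) /\ infs S' /\
    forall k k' i t, S' k -> S' k' -> (i < P)%nat -> 0 <= t <= T ->
      Rabs (F k i t - F k' i t) <= (2 * L * T + 1) / (INR (fst mS) + 1))) as [rf Hrf].
  { intros [m S]. destruct (classic (infs S)) as [H|H]. destruct (level m S H) as [S' HS']. exists S'; auto.
    exists S; intros; contradiction. }
  destruct (choice_fun (fun (Sn : (nat -> Prop) * nat) k => infs (fst Sn) -> (snd Sn <= k)%nat /\ fst Sn k)) as [pk Hpk].
  { intros [S n]. destruct (classic (infs S)) as [H|H]. destruct (H n) as [k Hk]. exists k; auto. exists O; intros; contradiction. }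
  set (Sq := nat_rect (fun _ => nat -> Prop) (rf (O, fun _ => True)) (fun m Sm => rf (S m, Sm))).
  assert (HSq : forall m, infs (Sq m) /\ forall k k' i t, Sq m k -> Sq m k' -> (i < P)%nat -> 0 <= t <= T ->
      Rabs (F k i t - F k' i t) <= (2 * L * T + 1) / (INR m + 1)).
  { induction m.
    - assert (I0 : infs (fun _ : nat => True)) by (intros n; exists n; auto). destruct (Hrf (O, fun _ => True) I0) as [_ [A B]]. split; auto.
    - destruct IHm as [IH1 IH2]. destruct (Hrf (S m, Sq m) IH1) as [_ [A B]]. split; auto. }
  assert (Hsub : forall m k, Sq (S m) k -> Sq m k).
  { intros m k. destruct (Hrf (S m, Sq m) (proj1 (HSq m))) as [A _]. apply A. }
  assert (Hsub2 : forall m m', (m <= m')%nat -> forall k, Sq m' k -> Sq m k).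
  { intros m m' H; induction H; auto. }
  set (phi := nat_rect (fun _ => nat) (pk (Sq O, O)) (fun m prev => pk (Sq (S m), S prev))).
  assert (Hphi : forall m, Sq m (phi m) /\ (m = O \/ (phi (pred m) < phi m)%nat)).
  { destruct m. destruct (Hpk (Sq O, O) (proj1 (HSq O))) as [_ B]. auto.
    destruct (Hpk (Sq (S m), S (phi m)) (proj1 (HSq (S m)))) as [A B]. split; [auto|]. right. simpl in A |- *. lia. }
  exists phi. split. { intros k. destruct (Hphi (S k)) as [_ [H|H]]; [lia|auto]. }
  assert (Hc : forall m m1 m2, (m <= m1)%nat -> (m <= m2)%nat -> forall i t, (i < P)%nat -> 0 <= t <= T ->
     Rabs (F (phi m1) i t - F (phi m2) i t) <= (2 * L * T + 1) / (INR m + 1)).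
  { intros. apply (proj2 (HSq m)); auto; [apply (Hsub2 m m1) | apply (Hsub2 m m2)]; auto; apply Hphi. }
  destruct (choice_fun (fun (it : nat * R) l => (fst it < P)%nat -> 0 <= snd it <= T ->
      Un_cv (fun m => F (phi m) (fst it) (snd it)) l)) as [lim Hlim].
  { intros [i t]. destruct (classic ((i < P)%nat /\ 0 <= t <= T)) as [[Hi Ht]|H].
    - assert (Hca : Cauchy_crit (fun m => F (phi m) i t)).
      { intros e He. destruct (small_inv (2 * L * T + 1) (e/2) ltac:(lra)) as [m Hm].
        exists m. intros n1 n2 H1 H2. unfold Rdist.
        pose proof (Hc m n1 n2 ltac:(lia) ltac:(lia) i t Hi Ht). lra. }
      destruct (R_complete _ Hca) as [l Hl]. exists l. intros _ _. exact Hl.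
    - exists 0. intros; exfalso; auto. }
  exists (fun i t => lim (i, t)).
  intros e He. destruct (small_inv (2 * L * T + 1) e He) as [m Hm]. exists m.
  intros k Hk i t Hi Ht. specialize (Hlim (i, t) Hi Ht). simpl in Hlim.
  apply Rnot_lt_le. intros Hlt.
  set (g := Rabs (F (phi k) i t - lim (i, t)) - (2 * L * T + 1) / (INR m + 1)).
  assert (Hg : 0 < g) by (unfold g; lra).
  destruct (Hlim g Hg) as [N0 HN0]. specialize (HN0 (Nat.max N0 k) ltac:(lia)). unfold Rdist in HN0.
  pose proof (Hc m k (Nat.max N0 k) Hk ltac:(lia) i t Hi Ht).
  pose proof (Rabs_triang (F (phi k) i t - F (phi (Nat.max N0 k)) i t) (F (phi (Nat.max N0 k)) i t - lim (i, t))).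
  replace (F (phi k) i t - F (phi (Nat.max N0 k)) i t + (F (phi (Nat.max N0 k)) i t - lim (i, t))) with
    (F (phi k) i t - lim (i, t)) in H0 by ring.
  unfold g in HN0. lra.
Qed.
End Compact.

Lemma deriv_zero : forall g t l eta, derivable_pt_lim g t l -> 0 < eta ->
  (forall u, t - eta <= u <= t + eta -> g u = g t) -> l = 0.
Proof. intros g t l eta Hd He Hc. destruct (Req_dec l 0) as [|Hl]; auto. exfalso.
  assert (Hal : 0 < Rabs l) by (apply Rabs_pos_lt; auto).
  destruct (Hd (Rabs l) Hal) as [[d Hdp] Hdd]. simpl in Hdd.
  set (h := Rmin d eta / 2). assert (0 < Rmin d eta) by (apply Rmin_glb_lt; auto).
  assert (h <> 0) by (unfold h; lra). assert (Hh : Rabs h < d).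
  { rewrite Rabs_right by (unfold h; lra). unfold h. pose proof (Rmin_l d eta). lra. }
  specialize (Hdd h H0 Hh). rewrite Hc in Hdd.
  replace ((g t - g t) / h - l) with (- l) in Hdd by (field; auto). rewrite Rabs_Ropp in Hdd. lra.
  unfold h; pose proof (Rmin_r d eta). lra. Qed.

Lemma lim_le : forall a b, (forall d, 0 < d -> exists a' b', Rabs (a - a') <= d /\ Rabs (b - b') <= d /\ a' <= b') -> a <= b.
Proof. intros a b H. apply Rnot_lt_le. intros Hlt. destruct (H ((a - b)/3) ltac:(lra)) as [a' [b' [H1 [H2 H3]]]].
  apply abs_le_iff in H1, H2. lra. Qed.

Lemma lim_eq : forall a b, (forall d, 0 < d -> exists a' b', Rabs (a - a') <= d /\ Rabs (b - b') <= d /\ a' = b') -> a = b.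
Proof. intros. apply Rle_antisym; apply lim_le; intros d Hd; destruct (H d Hd) as [a' [b' [H1 [H2 H3]]]].
  exists a', b'; repeat split; auto; lra. exists b', a'; repeat split; auto; lra. Qed.

Lemma weight_ext : forall N Rm f pi q q', (forall n, (n < N)%nat -> q n = q' n) ->
  weight N Rm f pi q = weight N Rm f pi q'.
Proof. intros. unfold weight. apply fsum_ext; intros. rewrite H by auto. f_equal. f_equal. apply fsum_ext; intros. rewrite H; auto. Qed.

Lemma fin_delta : forall (N : nat) (P : nat -> R -> Prop),
  (forall n d d', 0 < d' <= d -> P n d -> P n d') ->
  (forall n, (n < N)%nat -> exists d, 0 < d /\ P n d) -> exists d, 0 < d /\ forall n, (n < N)%nat -> P n d.
Proof. induction N; intros P Hm H. exists 1; split; [lra|intros; lia].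
  destruct (IHN P Hm) as [d1 [Hd1 H1]]. intros; apply H; lia.
  destruct (H N ltac:(lia)) as [d2 [Hd2 H2]]. exists (Rmin d1 d2). split. apply Rmin_glb_lt; auto.
  intros n Hn. destruct (Nat.eq_dec n N). subst. apply (Hm N d2); auto. split. apply Rmin_glb_lt; auto. apply Rmin_r.
  apply (Hm n d1); auto. split. apply Rmin_glb_lt; auto. apply Rmin_l. apply H1; lia. Qed.

Lemma f_cont : forall f, derivable_on_nonneg f -> forall x e, 0 <= x -> 0 < e ->
  exists r, 0 < r /\ forall y, 0 <= y -> Rabs (y - x) <= r -> Rabs (f y - f x) <= e.
Proof. intros f Hf x e Hx He. destruct (Hf x Hx) as [l Hl]. destruct (Hl 1 ltac:(lra)) as [d [Hd Hdd]].
  assert (Hl1 : 0 < Rabs l + 1) by (pose proof (Rabs_pos l); lra).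
  exists (Rmin (d/2) (e / (Rabs l + 1))). split. apply Rmin_glb_lt; [lra| apply Rdiv_lt_0_compat; lra].
  intros y Hy Hyx. destruct (Req_dec y x). subst. rewrite Rminus_diag, Rabs_R0; lra.
  assert (Hh : y - x <> 0) by lra.
  assert (Rabs (y - x) < d) by (pose proof (Rmin_l (d/2) (e / (Rabs l + 1))); lra).
  specialize (Hdd (y - x) Hh H0 ltac:(lra)). replace (x + (y - x)) with y in Hdd by ring.
  assert (E : f y - f x = ((f y - f x) / (y - x)) * (y - x)) by (field; auto).
  rewrite E, Rabs_mult.
  assert (Rabs ((f y - f x) / (y - x)) <= Rabs l + 1).
  { pose proof (Rabs_triang ((f y - f x) / (y - x) - l) l). replace ((f y - f x) / (y - x) - l + l) with ((f y - f x) / (y - x)) in H1 by ring. lra. }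
  assert (Rabs (y - x) <= e / (Rabs l + 1)) by (pose proof (Rmin_r (d/2) (e / (Rabs l + 1))); lra).
  apply Rle_trans with ((Rabs l + 1) * (e / (Rabs l + 1))). apply Rmult_le_compat; auto using Rabs_pos.
  right; field; lra. Qed.

Lemma weight_diff : forall N Rm f pi q q' L e, (forall n m, (n < N)%nat -> (m < N)%nat -> 0 <= Rm n m <= 1) ->
  (forall n, (n < N)%nat -> Rabs (pi n) <= L) ->
  (forall n, (n < N)%nat -> Rabs (f (q' n) - f (q n)) <= e) ->
  Rabs (weight N Rm f pi q' - weight N Rm f pi q) <= INR N * (L * ((1 + INR N) * e)).
Proof. intros. unfold weight. rewrite <- fsum_minus. apply fsum_abs_le. intros n Hn.
  replace (pi n * (f (q' n) - fsum N (fun m => Rm n m * f (q' m))) - pi n * (f (q n) - fsum N (fun m => Rm n m * f (q m))))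
   with (pi n * ((f (q' n) - f (q n)) - fsum N (fun m => Rm n m * (f (q' m) - f (q m))))).
  2:{ rewrite (fsum_ext N (fun m => Rm n m * (f (q' m) - f (q m))) (fun m => Rm n m * f (q' m) - Rm n m * f (q m))) by (intros; ring).
      rewrite fsum_minus. ring. }
  rewrite Rabs_mult. apply Rmult_le_compat; auto using Rabs_pos.
  assert (Rabs (fsum N (fun m => Rm n m * (f (q' m) - f (q m)))) <= INR N * e).
  { apply fsum_abs_le. intros m Hm. rewrite Rabs_mult. specialize (H n m Hn Hm). rewrite Rabs_right by lra.
    specialize (H1 m Hm). pose proof (Rabs_pos (f (q' m) - f (q m))). nra. }
  pose proof (H1 n Hn). unfold Rminus at 1. eapply Rle_trans. apply Rabs_triang. rewrite Rabs_Ropp. lra. Qed.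

Lemma weight_cont : forall N Rm f pi q L e, derivable_on_nonneg f ->
  (forall n m, (n < N)%nat -> (m < N)%nat -> 0 <= Rm n m <= 1) ->
  (forall n, (n < N)%nat -> Rabs (pi n) <= L) -> (forall n, (n < N)%nat -> 0 <= q n) -> 0 < e ->
  exists r, 0 < r /\ forall q', (forall n, (n < N)%nat -> 0 <= q' n /\ Rabs (q' n - q n) <= r) ->
    Rabs (weight N Rm f pi q' - weight N Rm f pi q) <= e.
Proof. intros N Rm f pi q L e Hf HR Hpi Hq He.
  assert (HL : 0 <= L \/ N = O). { destruct N. right; auto. left. specialize (Hpi O ltac:(lia)). pose proof (Rabs_pos (pi O)). lra. }
  set (C := INR N * (Rabs L * (1 + INR N)) + 1).
  assert (HC : 1 <= C). { unfold C. pose proof (pos_INR N). pose proof (Rabs_pos L). assert (0 <= INR N * (Rabs L * (1 + INR N))) by (apply Rmult_le_pos; nra). lra. }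
  destruct (fin_delta N (fun n r => forall y, 0 <= y -> Rabs (y - q n) <= r -> Rabs (f y - f (q n)) <= e / C)) as [r [Hr Hrr]].
  { intros n d d' Hd Hp y Hy Hyd. apply Hp; auto; lra. }
  { intros n Hn. apply f_cont; auto. apply Rdiv_lt_0_compat; lra. }
  exists r. split; auto. intros q' Hq'.
  eapply Rle_trans. apply (weight_diff N Rm f pi q q' (Rabs L) (e / C)); auto.
  intros n Hn. eapply Rle_trans. apply Hpi; auto. apply Rle_abs.
  intros n Hn. destruct (Hq' n Hn). apply Hrr; auto.
  apply Rle_trans with (C * (e / C)). assert (0 <= e / C) by (apply Rlt_le, Rdiv_lt_0_compat; lra).
  replace (INR N * (Rabs L * ((1 + INR N) * (e / C)))) with ((INR N * (Rabs L * (1 + INR N))) * (e / C)) by ring.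
  apply Rmult_le_compat_r; auto. unfold C; lra.
  right; field; lra. Qed.

Lemma fluid_const : forall T z (g : nat -> R) (p : R -> R) t eta,
  1 <= z -> 0 < eta -> 1 <= z * eta -> 0 <= t - eta -> t + eta <= T ->
  (forall u, 0 <= u <= T -> interp_at g (z * u) (z * p u)) ->
  (forall tau : nat, z * (t - 2 * eta) <= INR tau <= z * (t + eta) -> g (S tau) = g tau) ->
  forall u, t - eta <= u <= t + eta -> p u = p t.
Proof. intros T z g p t eta Hz He Hze Ht1 Ht2 Hi Hc u Hu.
  assert (z * p u = z * p t).
  { apply (interp_const g (z * (t - eta)) (z * (t + eta)) (z * u) (z * t)).
    apply Rmult_le_pos; lra.
    intros tau Htau. apply Hc. split; nra.
    split; apply Rmult_le_compat_l; lra. split; apply Rmult_le_compat_l; lra.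
    apply Hi; lra. apply Hi; lra. }
  apply Rmult_eq_reg_l in H; lra. Qed.

Lemma Q_at_tau : forall N M T X z x, is_fluid_scaling N M T X z x -> 1 <= z ->
  forall (tau : nat) n, (n < N)%nat -> INR tau <= z * T -> dQ X tau n = z * fq x (INR tau / z) n.
Proof. intros. assert (0 <= INR tau) by apply pos_INR.
  assert (Ht : 0 <= INR tau / z <= T).
  { split. apply Rmult_le_pos; auto. apply Rlt_le, Rinv_0_lt_compat; lra.
    apply (Rmult_le_reg_l z); [lra|]. replace (z * (INR tau / z)) with (INR tau) by (field; lra). auto. }
  destruct (H _ Ht) as [H4 _]. destruct (H4 n H1) as [Hq _].
  replace (z * (INR tau / z)) with (INR tau) in Hq by (field; lra). apply interp_nat in Hq. auto. Qed.

Lemma mono_abs : forall (g : R -> R) T L, (forall t t', 0 <= t -> t <= t' -> t' <= T -> 0 <= g t' - g t <= L * (t' - t)) ->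
  forall t t', 0 <= t <= T -> 0 <= t' <= T -> Rabs (g t - g t') <= L * Rabs (t - t').
Proof. intros. destruct (Rle_dec t t'). specialize (H t t' ltac:(lra) r ltac:(lra)).
  rewrite Rabs_minus_sym, (Rabs_minus_sym t), !Rabs_right by lra. lra.
  specialize (H t' t ltac:(lra) ltac:(lra) ltac:(lra)). rewrite !Rabs_right by lra. lra. Qed.

Lemma sinc_ge : forall p : nat -> nat, (forall k, (p k < p (S k))%nat) -> forall k, (k <= p k)%nat.
Proof. intros p H k; induction k. lia. specialize (H k). lia. Qed.
Lemma sinc_mono : forall p : nat -> nat, (forall k, (p k < p (S k))%nat) -> forall k k', (k <= k')%nat -> (p k <= p k')%nat.
Proof. intros p H k k' Hk; induction Hk. lia. specialize (H m). lia. Qed.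
Lemma sinc_comp : forall p q : nat -> nat, (forall k, (p k < p (S k))%nat) -> (forall k, (q k < q (S k))%nat) ->
  forall k, (p (q k) < p (q (S k)))%nat.
Proof. intros. assert (q k < q (S k))%nat by auto. assert (p (S (q k)) <= p (q (S k)))%nat by (apply sinc_mono; auto).
  specialize (H (q k)). lia. Qed.

Lemma lip_abs_cont : forall (g : R -> R) T L, 0 <= L ->
  (forall t t', 0 <= t <= T -> 0 <= t' <= T -> Rabs (g t - g t') <= L * Rabs (t - t')) -> abs_cont g 0 T.
Proof. intros g T L HL H e He. exists (e / (L + 1)). split. apply Rdiv_lt_0_compat; lra.
  intros m u v Hm Hu0 Huv Hvu Hvm Hs.
  assert (Hu : forall i, (i < m)%nat -> 0 <= u i).
  { induction i; intros; auto. assert (v i <= u (S i)) by (apply Hvu; lia). assert (u i <= v i) by (apply Huv; lia). assert (0 <= u i) by (apply IHi; lia). lra. }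
  assert (Hv : forall j i, (i + j = pred m)%nat -> v i <= T).
  { induction j; intros i Hij. replace i with (pred m) by lia. auto.
    assert (v i <= u (S i)) by (apply Hvu; lia). assert (u (S i) <= v (S i)) by (apply Huv; lia).
    assert (v (S i) <= T) by (apply IHj; lia). lra. }
  apply Rle_lt_trans with (fsum m (fun i => L * (v i - u i))).
  apply fsum_le. intros i Hi. assert (u i <= v i) by auto. rewrite <- (Rabs_right (v i - u i)) by lra.
  assert (v i <= T) by (apply (Hv (pred m - i)%nat); lia). pose proof (Hu i Hi).
  apply H; lra.
  rewrite fsum_scal. apply Rle_lt_trans with (L * (e / (L + 1))). apply Rmult_le_compat_l; lra.
  apply (Rmult_lt_reg_r (L + 1)); [lra|]. replace (L * (e / (L + 1)) * (L + 1)) with (L * e) by (field; lra). nra. Qed.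

Lemma key : forall N M sched Rm f T K lam (x : nat -> fpath) (z : nat -> R) (X : nat -> dpath),
  network_ok N M sched Rm f -> 0 < T -> (forall n, (n < N)%nat -> 0 <= lam n) ->
  (forall k, 1 <= z k) -> (forall k, is_MW_sample_path N M sched Rm f (X k)) ->
  (forall k, is_fluid_scaling N M T (X k) (z k) (x k)) ->
  (forall B, exists k0, forall k, (k0 <= k)%nat -> B <= z k) ->
  (forall e, 0 < e -> exists k0, forall k, (k0 <= k)%nat -> forall t n, 0 <= t <= T -> (n < N)%nat ->
     Rabs (fa (x k) t n - lam n * t) <= e) ->
  (forall k n, (n < N)%nat -> Rabs (fq (x k) 0 n) <= K) ->
  exists phi : nat -> nat, (forall k, (k <= phi k)%nat) /\ exists h, is_FMS N M sched Rm f T lam h /\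
   (forall n, (n < N)%nat -> Rabs (fq h 0 n) <= K) /\
   forall e, 0 < e -> exists k0, forall k, (k0 <= k)%nat -> dist_le N M T (x (phi k)) h e.
Proof.
  intros N M sched Rm f T K lam x z X Hok HT Hlam Hz HX Hfl Hzinf Hfa Hq0.
  set (L := Lsch N M sched).
  pose proof Hok as [Hsch _].
  assert (HL1 : 1 <= L) by (apply Lsch_pos; auto).
  assert (HLs : forall k n, (k < M)%nat -> (n < N)%nat -> 0 <= sched k n <= L) by
    (intros; pose proof (Lsch_bound N M sched Hsch k n H H0); fold L in H1; lra).
  pose proof (Rm01 _ _ _ _ _ Hok) as HR.
  assert (FF := fun k => fluid_facts N M sched Rm f T (X k) (z k) (x k) Hok (HX k) (Hfl k) (Hz k)).
  destruct (compactness N (fun k n t => fy (x k) t n) T (L * T) L HT ltac:(lra)) as [phi1 [Hp1 [Yh HY]]].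
  { intros k n t Hn Ht. destruct (FF k) as [_ [H2 [_ [H4 _]]]]. specialize (H2 0 t n ltac:(lra) ltac:(lra) ltac:(lra) Hn).
    rewrite H4 in H2 by (auto; lra). apply abs_le_iff. fold L in H2. nra. }
  { intros k n t t' Hn Ht Ht'. destruct (FF k) as [_ [H2 _]]. apply (mono_abs (fun t => fy (x k) t n) T); auto. }
  destruct (compactness M (fun k j t => fs (x (phi1 k)) t j) T (L * T) L HT ltac:(lra)) as [phi2 [Hp2 [Sh HS]]].
  { intros k n t Hn Ht. destruct (FF (phi1 k)) as [_ [_ [H2 [_ [H4 _]]]]]. specialize (H2 0 t n ltac:(lra) ltac:(lra) ltac:(lra) Hn).
    rewrite H4 in H2 by (auto; lra). apply abs_le_iff. fold L in H2. nra. }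
  { intros k n t t' Hn Ht Ht'. destruct (FF (phi1 k)) as [_ [_ [H2 _]]]. apply (mono_abs (fun t => fs (x (phi1 k)) t n) T); auto. }
  destruct (compactness N (fun k n t => fq (x (phi1 (phi2 k))) 0 n) T K 0 HT ltac:(lra)) as [phi3 [Hp3 [Q0h HQ0]]].
  { intros; auto. }
  { intros. rewrite Rminus_diag, Rabs_R0. lra. }
  set (phi := fun k => phi1 (phi2 (phi3 k))).
  assert (Hp : forall k, (phi k < phi (S k))%nat) by (intros; unfold phi; apply (sinc_comp phi1 (fun k => phi2 (phi3 k))); auto; intros; apply sinc_comp; auto).
  assert (Hpge : forall k, (k <= phi k)%nat) by (apply sinc_ge; auto).
  set (Q0 := fun n => Q0h n 0).
  set (vh := fun t m => fsum M (fun j => Sh j t * sched j m) - Yh m t).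
  set (h := mkfpath (fun t n => Q0 n + lam n * t - IminusRT N Rm (vh t) n) (fun t n => lam n * t)
                    (fun t n => Yh n t) (fun t j => Sh j t)).
  assert (Happ : forall d B, 0 < d -> exists k0, forall k, (k0 <= k)%nat ->
     B <= z (phi k) /\
     (forall t n, 0 <= t <= T -> (n < N)%nat -> Rabs (fy (x (phi k)) t n - Yh n t) <= d /\
        Rabs (fa (x (phi k)) t n - lam n * t) <= d) /\
     (forall t j, 0 <= t <= T -> (j < M)%nat -> Rabs (fs (x (phi k)) t j - Sh j t) <= d) /\
     (forall n, (n < N)%nat -> Rabs (fq (x (phi k)) 0 n - Q0 n) <= d)).
  { intros d B Hd. destruct (HY d Hd) as [k1 H1]. destruct (HS d Hd) as [k2 H2]. destruct (HQ0 d Hd) as [k3 H3].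
    destruct (Hfa d Hd) as [k4 H4]. destruct (Hzinf B) as [k5 H5].
    exists (Nat.max k1 (Nat.max k2 (Nat.max k3 (Nat.max k4 k5)))). intros k Hk.
    split. apply H5. pose proof (Hpge k). lia.
    split. intros t n Ht Hn. split.
    apply (H1 (phi2 (phi3 k))); auto. pose proof (sinc_ge _ Hp2 (phi3 k)). pose proof (sinc_ge _ Hp3 k). lia.
    apply H4; auto. pose proof (Hpge k). lia.
    split. intros t j Ht Hj. apply (H2 (phi3 k)); auto. pose proof (sinc_ge _ Hp3 k). lia.
    intros n Hn. apply (H3 k); auto. lia. lra. }

  assert (Hsd : forall (a b : nat -> R) m d, (m < N)%nat -> (forall j, (j < M)%nat -> Rabs (a j - b j) <= d) ->
     Rabs (fsum M (fun j => a j * sched j m) - fsum M (fun j => b j * sched j m)) <= INR M * (d * L)).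
  { intros a b m d Hm Hab. rewrite <- fsum_minus. apply fsum_abs_le. intros j Hj.
    replace (a j * sched j m - b j * sched j m) with ((a j - b j) * sched j m) by ring.
    rewrite Rabs_mult. pose proof (HLs j m Hj Hm). rewrite (Rabs_right (sched j m)) by lra.
    pose proof (Hab j Hj). pose proof (Rabs_pos (a j - b j)). nra. }
  assert (HMpos : 0 <= INR M) by apply pos_INR. assert (HNpos : 0 <= INR N) by apply pos_INR.
  assert (HML : 0 <= INR M * L) by nra.
  assert (Ylip : forall t t' n, 0 <= t -> t <= t' -> t' <= T -> (n < N)%nat -> 0 <= Yh n t' - Yh n t <= L * (t' - t)).
  { intros t t' n H1 H2 H3 Hn. split.
    - apply Rge_le, Rge_minus, Rle_ge. apply lim_le. intros d Hd. destruct (Happ d 0 Hd) as [k0 Hk0]. destruct (Hk0 k0 (le_n _)) as [_ [A _]].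
      exists (fy (x (phi k0)) t n), (fy (x (phi k0)) t' n).
      destruct (A t n ltac:(lra) Hn) as [A1 _]. destruct (A t' n ltac:(lra) Hn) as [A2 _].
      destruct (FF (phi k0)) as [_ [B _]]. specialize (B t t' n H1 H2 H3 Hn).
      rewrite Rabs_minus_sym in A1, A2. repeat split; auto; lra.
    - apply Rplus_le_reg_r with (Yh n t). ring_simplify. apply lim_le. intros d Hd. destruct (Happ d 0 Hd) as [k0 Hk0]. destruct (Hk0 k0 (le_n _)) as [_ [A _]].
      exists (fy (x (phi k0)) t' n), (L * t' - L * t + fy (x (phi k0)) t n).
      destruct (A t n ltac:(lra) Hn) as [A1 _]. destruct (A t' n ltac:(lra) Hn) as [A2 _].
      destruct (FF (phi k0)) as [_ [B _]]. specialize (B t t' n H1 H2 H3 Hn). fold L in B.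
      rewrite Rabs_minus_sym in A2. split; auto. split. apply abs_le_iff; apply abs_le_iff in A1; lra. lra. }
  assert (Slip : forall t t' j, 0 <= t -> t <= t' -> t' <= T -> (j < M)%nat -> 0 <= Sh j t' - Sh j t <= L * (t' - t)).
  { intros t t' n H1 H2 H3 Hn. split.
    - apply Rge_le, Rge_minus, Rle_ge. apply lim_le. intros d Hd. destruct (Happ d 0 Hd) as [k0 Hk0]. destruct (Hk0 k0 (le_n _)) as [_ [_ [A _]]].
      exists (fs (x (phi k0)) t n), (fs (x (phi k0)) t' n).
      pose proof (A t n ltac:(lra) Hn) as A1. pose proof (A t' n ltac:(lra) Hn) as A2.
      destruct (FF (phi k0)) as [_ [_ [B _]]]. specialize (B t t' n H1 H2 H3 Hn).
      rewrite Rabs_minus_sym in A1, A2. repeat split; auto; lra.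
    - apply Rplus_le_reg_r with (Sh n t). ring_simplify. apply lim_le. intros d Hd. destruct (Happ d 0 Hd) as [k0 Hk0]. destruct (Hk0 k0 (le_n _)) as [_ [_ [A _]]].
      exists (fs (x (phi k0)) t' n), (L * t' - L * t + fs (x (phi k0)) t n).
      pose proof (A t n ltac:(lra) Hn) as A1. pose proof (A t' n ltac:(lra) Hn) as A2.
      destruct (FF (phi k0)) as [_ [_ [B _]]]. specialize (B t t' n H1 H2 H3 Hn). fold L in B.
      rewrite Rabs_minus_sym in A2. split; auto. split. apply abs_le_iff; apply abs_le_iff in A1; lra. lra. }
  assert (Y0 : forall n, (n < N)%nat -> Yh n 0 = 0).
  { intros n Hn. apply lim_eq. intros d Hd. destruct (Happ d 0 Hd) as [k0 Hk0]. destruct (Hk0 k0 (le_n _)) as [_ [A _]].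
    exists (fy (x (phi k0)) 0 n), 0. destruct (A 0 n ltac:(lra) Hn) as [A1 _]. rewrite Rabs_minus_sym in A1.
    destruct (FF (phi k0)) as [_ [_ [_ [B _]]]]. rewrite Rminus_diag, Rabs_R0. repeat split; auto; try lra. apply B; auto; lra. }
  assert (S0 : forall j, (j < M)%nat -> Sh j 0 = 0).
  { intros n Hn. apply lim_eq. intros d Hd. destruct (Happ d 0 Hd) as [k0 Hk0]. destruct (Hk0 k0 (le_n _)) as [_ [_ [A _]]].
    exists (fs (x (phi k0)) 0 n), 0. pose proof (A 0 n ltac:(lra) Hn) as A1. rewrite Rabs_minus_sym in A1.
    destruct (FF (phi k0)) as [_ [_ [_ [_ [B _]]]]]. rewrite Rminus_diag, Rabs_R0. repeat split; auto; try lra. apply B; auto; lra. }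
  assert (YB : forall t n, 0 <= t <= T -> (n < N)%nat -> Yh n t <= fsum M (fun j => Sh j t * sched j n)).
  { intros t n Ht Hn. apply lim_le. intros d Hd.
    assert (Hd' : 0 < d / (INR M * L + 1)) by (apply Rdiv_lt_0_compat; nra).
    destruct (Happ _ 0 Hd') as [k0 Hk0]. destruct (Hk0 k0 (le_n _)) as [_ [A [B _]]].
    exists (fy (x (phi k0)) t n), (fsum M (fun j => fs (x (phi k0)) t j * sched j n)).
    destruct (A t n Ht Hn) as [A1 _]. rewrite Rabs_minus_sym in A1.
    assert (E : d / (INR M * L + 1) <= d). { apply (Rmult_le_reg_r (INR M * L + 1)); [nra|].
      replace (d / (INR M * L + 1) * (INR M * L + 1)) with d by (field; nra). nra. }
    split. lra. split.
    - eapply Rle_trans. apply (Hsd (fun j => Sh j t) (fun j => fs (x (phi k0)) t j) n (d / (INR M * L + 1)) Hn).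
      intros j Hj. rewrite Rabs_minus_sym. apply B; auto.
      replace (INR M * (d / (INR M * L + 1) * L)) with (d * (INR M * L / (INR M * L + 1))) by (field; nra).
      apply Rle_trans with (d * 1); [|lra]. apply Rmult_le_compat_l; [lra|].
      apply (Rmult_le_reg_r (INR M * L + 1)); [nra|]. replace (INR M * L / (INR M * L + 1) * (INR M * L + 1)) with (INR M * L) by (field; nra). lra.
    - destruct (FF (phi k0)) as [_ [_ [_ [_ [_ [C _]]]]]]. apply C; auto. }
  assert (Ssum : forall t, 0 <= t <= T -> fsum M (fun j => Sh j t) = t).
  { intros t Ht. apply lim_eq. intros d Hd.
    assert (Hd' : 0 < d / (INR M + 1)) by (apply Rdiv_lt_0_compat; nra).
    destruct (Happ _ 0 Hd') as [k0 Hk0]. destruct (Hk0 k0 (le_n _)) as [_ [_ [B _]]].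
    exists (fsum M (fun j => fs (x (phi k0)) t j)), t. split.
    - rewrite <- fsum_minus. eapply Rle_trans. apply fsum_abs_le. intros j Hj. rewrite Rabs_minus_sym. apply B; auto.
      apply (Rmult_le_reg_r (INR M + 1)); [nra|]. replace (INR M * (d / (INR M + 1)) * (INR M + 1)) with (INR M * d) by (field; nra). nra.
    - rewrite Rminus_diag, Rabs_R0. split; [lra|]. destruct (FF (phi k0)) as [_ [_ [_ [_ [_ [_ [C _]]]]]]]. apply C; auto. }

  set (Cq := 2 + (1 + INR N) * (INR M * L + 1)).
  assert (HCq : 1 <= Cq) by (unfold Cq; nra).
  assert (Qdiff : forall d B, 0 < d -> exists k0, forall k, (k0 <= k)%nat -> B <= z (phi k) /\
      forall t n, 0 <= t <= T -> (n < N)%nat -> Rabs (fq (x (phi k)) t n - fq h t n) <= d).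
  { intros d B Hd. assert (Hd' : 0 < d / Cq) by (apply Rdiv_lt_0_compat; lra).
    destruct (Happ _ B Hd') as [k0 Hk0]. exists k0. intros k Hk. destruct (Hk0 k Hk) as [Z [A [B' C]]].
    split; auto. intros t n Ht Hn.
    destruct (FF (phi k)) as [_ [_ [_ [_ [_ [_ [_ E]]]]]]]. rewrite (E t n Ht Hn).
    change (fq h t n) with (Q0 n + lam n * t - IminusRT N Rm (vh t) n).
    set (vx := fun m => fsum M (fun k0 => fs (x (phi k)) t k0 * sched k0 m) - fy (x (phi k)) t m).
    assert (EI : IminusRT N Rm vx n - IminusRT N Rm (vh t) n = IminusRT N Rm (fun m => 1 * vx m + (-1) * vh t m) n)
      by (rewrite IminusRT_lin; ring).
    assert (BI : Rabs (IminusRT N Rm (fun m => 1 * vx m + (-1) * vh t m) n) <= (1 + INR N) * (INR M * (d / Cq * L) + d / Cq)).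
    { apply IminusRT_bound; [intros m0 Hm0; apply HR; auto | auto | intros m Hm].
      replace (1 * vx m + -1 * vh t m) with ((fsum M (fun j => fs (x (phi k)) t j * sched j m) - fsum M (fun j => Sh j t * sched j m)) - (fy (x (phi k)) t m - Yh m t))
        by (unfold vx, vh; ring).
      eapply Rle_trans. unfold Rminus at 1. apply Rabs_triang. rewrite Rabs_Ropp.
      apply Rplus_le_compat. apply Hsd; auto. apply (A t m Ht Hm). }
    destruct (A t n Ht Hn) as [_ A2]. pose proof (C n Hn) as C1.
    replace (fq (x (phi k)) 0 n + fa (x (phi k)) t n - IminusRT N Rm vx n - (Q0 n + lam n * t - IminusRT N Rm (vh t) n))
      with ((fq (x (phi k)) 0 n - Q0 n) + (fa (x (phi k)) t n - lam n * t) - (IminusRT N Rm vx n - IminusRT N Rm (vh t) n)) by ring.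
    rewrite EI. apply abs_le_iff in BI, A2, C1. apply abs_le_iff.
    assert (EQ : d = 2 * (d / Cq) + (1 + INR N) * (INR M * L + 1) * (d / Cq)) by (unfold Cq; field; nra).
    assert ((1 + INR N) * (INR M * (d / Cq * L) + d / Cq) = ((1 + INR N) * (INR M * L + 1)) * (d / Cq)) by ring.
    lra. }
  assert (Q0b : forall n, (n < N)%nat -> Rabs (Q0 n) <= K).
  { intros n Hn. apply abs_le_iff. split.
    - apply lim_le. intros d Hd. destruct (Happ d 0 Hd) as [k0 Hk0]. destruct (Hk0 k0 (le_n _)) as [_ [_ [_ C]]].
      exists (- K), (fq (x (phi k0)) 0 n). rewrite Rminus_diag, Rabs_R0. split; [lra|]. split. rewrite Rabs_minus_sym; auto.
      specialize (Hq0 (phi k0) n Hn). apply abs_le_iff in Hq0. lra.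
    - apply lim_le. intros d Hd. destruct (Happ d 0 Hd) as [k0 Hk0]. destruct (Hk0 k0 (le_n _)) as [_ [_ [_ C]]].
      exists (fq (x (phi k0)) 0 n), K. rewrite Rminus_diag, Rabs_R0. split. rewrite Rabs_minus_sym; auto. split; [lra|].
      specialize (Hq0 (phi k0) n Hn). apply abs_le_iff in Hq0. lra. }
  assert (qpos : forall t n, 0 <= t <= T -> (n < N)%nat -> 0 <= fq h t n).
  { intros t n Ht Hn. apply lim_le. intros d Hd. destruct (Qdiff d 0 Hd) as [k0 Hk0]. destruct (Hk0 k0 (le_n _)) as [_ A].
    exists 0, (fq (x (phi k0)) t n). rewrite Rminus_diag, Rabs_R0. split; [lra|]. split. rewrite Rabs_minus_sym; auto.
    destruct (FF (phi k0)) as [B _]. apply B; auto. }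
  set (Lq := fsum N lam + (1 + INR N) * (INR M * (L * L) + L)).
  assert (qlip : forall t t' n, 0 <= t <= T -> 0 <= t' <= T -> (n < N)%nat -> Rabs (fq h t n - fq h t' n) <= Lq * Rabs (t - t')).
  { intros t t' n Ht Ht' Hn.
    change (fq h t n) with (Q0 n + lam n * t - IminusRT N Rm (vh t) n).
    change (fq h t' n) with (Q0 n + lam n * t' - IminusRT N Rm (vh t') n).
    replace (Q0 n + lam n * t - IminusRT N Rm (vh t) n - (Q0 n + lam n * t' - IminusRT N Rm (vh t') n))
      with (lam n * (t - t') - IminusRT N Rm (fun m => 1 * vh t m + (-1) * vh t' m) n) by (rewrite IminusRT_lin; ring).
    assert (BI : Rabs (IminusRT N Rm (fun m => 1 * vh t m + (-1) * vh t' m) n) <= (1 + INR N) * (INR M * (L * Rabs (t - t') * L) + L * Rabs (t - t'))).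
    { apply IminusRT_bound; [intros m0 Hm0; apply HR; auto | auto | intros m Hm].
      replace (1 * vh t m + -1 * vh t' m) with ((fsum M (fun j => Sh j t * sched j m) - fsum M (fun j => Sh j t' * sched j m)) - (Yh m t - Yh m t'))
        by (unfold vh; ring).
      eapply Rle_trans. unfold Rminus at 1. apply Rabs_triang. rewrite Rabs_Ropp.
      apply Rplus_le_compat. apply Hsd; auto. intros j Hj. apply (mono_abs (fun u => Sh j u) T L); auto.
      apply (mono_abs (fun u => Yh m u) T L); auto. }
    assert (Hlamn : lam n <= fsum N lam) by (apply fsum_ge_term; auto).
    pose proof (Hlam n Hn). pose proof (Rabs_pos (t - t')).
    eapply Rle_trans. unfold Rminus at 1. apply Rabs_triang. rewrite Rabs_Ropp, Rabs_mult, (Rabs_right (lam n)) by lra.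
    unfold Lq. assert (EE : (1 + INR N) * (INR M * (L * Rabs (t - t') * L) + L * Rabs (t - t')) =
      ((1 + INR N) * (INR M * (L * L) + L)) * Rabs (t - t')) by ring. rewrite EE in BI.
    assert (lam n * Rabs (t - t') <= fsum N lam * Rabs (t - t')) by nra. lra. }
  assert (HLq : 0 <= Lq). { unfold Lq. assert (0 <= fsum N lam) by (apply fsum_nonneg; auto). assert (0 <= INR M * (L * L)) by (apply Rmult_le_pos; nra). assert (0 <= (1 + INR N) * (INR M * (L * L) + L)) by (apply Rmult_le_pos; lra). lra. }
  exists phi. split; auto. exists h. split.
  2:{ split. intros n Hn. change (fq h 0 n) with (Q0 n + lam n * 0 - IminusRT N Rm (vh 0) n).
      rewrite (IminusRT_ext N Rm (vh 0) (fun _ => 0)); auto. unfold IminusRT. rewrite fsum_zero by (intros; ring).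
      replace (Q0 n + lam n * 0 - (0 - 0)) with (Q0 n) by ring. auto.
      intros m Hm. unfold vh. rewrite Y0, fsum_zero; auto. ring. intros j Hj. rewrite S0; auto; ring.
      intros e He. destruct (Qdiff e 0 He) as [k1 Hk1]. destruct (Happ e 0 He) as [k2 Hk2].
      exists (Nat.max k1 k2). intros k Hk. destruct (Hk1 k ltac:(lia)) as [_ A]. destruct (Hk2 k ltac:(lia)) as [_ [B [C _]]].
      intros t Ht. split. intros n Hn. split. apply A; auto. destruct (B t n Ht Hn); split; auto. intros j Hj; apply C; auto. }

  assert (qh0 : forall n, (n < N)%nat -> fq h 0 n = Q0 n).
  { intros n Hn. change (fq h 0 n) with (Q0 n + lam n * 0 - IminusRT N Rm (vh 0) n).
    rewrite (IminusRT_ext N Rm (vh 0) (fun _ => 0)); auto. unfold IminusRT. rewrite fsum_zero by (intros; ring). ring.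
    intros m Hm. unfold vh. rewrite Y0, fsum_zero; auto. ring. intros j Hj. rewrite S0; auto; ring. }
  split.
  { intros t n Ht Hn. split; [apply qpos; auto|]. split. simpl. apply Rmult_le_pos; [apply Hlam; auto|lra].
    simpl. pose proof (Ylip 0 t n ltac:(lra) ltac:(lra) ltac:(lra) Hn). rewrite Y0 in H by auto. lra. }
  split.
  { intros t j Ht Hj. simpl. pose proof (Slip 0 t j ltac:(lra) ltac:(lra) ltac:(lra) Hj). rewrite S0 in H by auto. lra. }
  split.
  { intros n Hn. split. apply (lip_abs_cont _ T Lq); [auto| intros; apply qlip; auto].
    split. apply (lip_abs_cont _ T (lam n)); auto. intros. simpl. rewrite <- Rmult_minus_distr_l, Rabs_mult, (Rabs_right (lam n)) by (apply Rle_ge; auto). lra.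
    apply (lip_abs_cont _ T L). lra. intros. simpl. apply (mono_abs (fun u => Yh n u) T L); auto. }
  split.
  { intros j Hj. apply (lip_abs_cont _ T L). lra. intros. simpl. apply (mono_abs (fun u => Sh j u) T L); auto. }
  split.
  { intros t n Ht Hn. rewrite qh0 by auto. reflexivity. }
  split. { intros; reflexivity. }
  split. { intros t Ht. apply Ssum; auto. }
  split. { intros t n Ht Hn. apply YB; auto. }
  split. { intros t1 t2 j H1 H2 H3 Hj. simpl. pose proof (Slip t1 t2 j H1 H2 H3 Hj). lra. }
  split. { intros t1 t2 n H1 H2 H3 Hn. simpl. pose proof (Ylip t1 t2 n H1 H2 H3 Hn). lra. }

  pose proof Hok as [_ [_ [_ [_ [_ [_ [Hfd [_ [_ [Hscale _]]]]]]]]]].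
  assert (Hnb : forall t rho, 0 < t < T -> 0 < rho -> exists eta, 0 < eta /\ 0 <= t - 2 * eta /\ t + eta <= T /\
     forall s n, t - 2 * eta <= s <= t + eta -> (n < N)%nat -> Rabs (fq h s n - fq h t n) <= rho).
  { intros t rho Ht Hrho. set (eta := Rmin (t/2) (Rmin (T - t) (rho / (2 * (Lq + 1))))).
    assert (E1 : eta <= t/2) by apply Rmin_l. assert (E2 : eta <= T - t) by (eapply Rle_trans; [apply Rmin_r| apply Rmin_l]).
    assert (E3 : eta <= rho / (2 * (Lq + 1))) by (eapply Rle_trans; [apply Rmin_r| apply Rmin_r]).
    assert (E0 : 0 < eta) by (apply Rmin_glb_lt; [lra| apply Rmin_glb_lt; [lra| apply Rdiv_lt_0_compat; lra]]).
    exists eta. split; auto. split; [lra|]. split; [lra|]. intros s n Hs Hn.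
    eapply Rle_trans. apply qlip; auto; lra.
    assert (Rabs (s - t) <= 2 * eta) by (apply abs_le_iff; lra).
    assert (2 * eta * (Lq + 1) <= rho). { apply (Rmult_le_compat_r (2 * (Lq + 1))) in E3; [|lra].
      replace (rho / (2 * (Lq + 1)) * (2 * (Lq + 1))) with rho in E3 by (field; lra). lra. }
    pose proof (Rabs_pos (s - t)). nra. }
  split.
  { intros t n l Ht Hn Hd Hq.
    set (q := fq h t n).
    destruct (Hnb t (q / 4) Ht ltac:(unfold q; lra)) as [eta [He [He1 [He2 Hq4]]]].
    apply (deriv_zero _ t l eta Hd He). intros u Hu. simpl.
    apply lim_eq. intros d Hd0. set (d' := Rmin d (q / 4)).
    assert (Hd'1 : d' <= d) by apply Rmin_l. assert (Hd'2 : d' <= q / 4) by apply Rmin_r.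
    assert (Hd'0 : 0 < d') by (apply Rmin_glb_lt; unfold q; lra).
    destruct (Qdiff d' (1 / eta + 2 * L / q) Hd'0) as [k1 Hk1]. destruct (Happ d' 0 Hd'0) as [k2 Hk2].
    set (k := Nat.max k1 k2). destruct (Hk1 k ltac:(lia)) as [Zk A]. destruct (Hk2 k ltac:(lia)) as [_ [B _]].
    set (zz := z (phi k)).
    assert (Hzz1 : 1 <= zz * eta). { assert (1 / eta <= zz) by (unfold zz; assert (0 <= 2 * L / q) by (apply Rmult_le_pos; [lra| apply Rlt_le, Rinv_0_lt_compat; unfold q; lra]); lra).
      apply (Rmult_le_compat_r eta) in H; [|lra]. replace (1 / eta * eta) with 1 in H by (field; lra). lra. }
    assert (Hzz2 : L <= zz * (q / 2)). { assert (2 * L / q <= zz) by (unfold zz; assert (0 <= 1 / eta) by (apply Rlt_le, Rdiv_lt_0_compat; lra); lra).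
      apply (Rmult_le_compat_r (q / 2)) in H; [|unfold q; lra]. replace (2 * L / q * (q / 2)) with L in H by (field; unfold q; lra). lra. }
    exists (fy (x (phi k)) u n), (fy (x (phi k)) t n).
    destruct (B u n ltac:(lra) Hn) as [B1 _]. destruct (B t n ltac:(lra) Hn) as [B2 _].
    rewrite Rabs_minus_sym in B1, B2. split; [lra|]. split; [lra|].
    destruct (mw_facts N M sched Rm f (X (phi k)) Hok (HX (phi k))) as
      [sigma [Hsig [HMW [HQpos [_ [_ [_ [_ [_ [_ [HYc [HSc _]]]]]]]]]]]].
    assert (Hz1 : 1 <= zz) by (unfold zz; auto).
    apply (fluid_const T zz (fun tau => dY (X (phi k)) tau n) (fun u => fy (x (phi k)) u n) t eta); auto; try lra.
    - intros u0 Hu0. destruct (Hfl (phi k) u0 Hu0) as [C1 _]. apply (C1 n Hn).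
    - intros tau Htau. apply HYc; auto.
      assert (Hs : t - 2 * eta <= INR tau / zz <= t + eta).
      { split; apply (Rmult_le_reg_l zz); try lra; replace (zz * (INR tau / zz)) with (INR tau) by (field; lra); lra. }
      rewrite (Q_at_tau N M T (X (phi k)) zz (x (phi k)) (Hfl (phi k)) ltac:(unfold zz; auto) tau n Hn) by nra.
      pose proof (Hq4 _ n Hs Hn). pose proof (A (INR tau / zz) n ltac:(lra) Hn). apply abs_le_iff in H, H0. fold q in H.
      pose proof (HLs (sigma tau) n (Hsig tau) Hn).
      assert (q / 2 <= fq (x (phi k)) (INR tau / zz) n) by lra.
      assert (zz * (q / 2) <= zz * fq (x (phi k)) (INR tau / zz) n) by (apply Rmult_le_compat_l; lra). lra. }
  { intros t j l Ht Hj Hd [l' [Hl' Hw]].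
    set (gap := weight N Rm f (sched l') (fq h t) - weight N Rm f (sched j) (fq h t)).
    assert (Hgap : 0 < gap) by (unfold gap; lra).
    assert (Hqt : forall n, (n < N)%nat -> 0 <= fq h t n) by (intros; apply qpos; auto; lra).
    destruct (weight_cont N Rm f (sched j) (fq h t) L (gap / 3) Hfd HR) as [r1 [Hr1 Hw1]]; auto.
    { intros n Hn. rewrite Rabs_right; [apply HLs; auto| apply Rle_ge, HLs; auto]. } lra.
    destruct (weight_cont N Rm f (sched l') (fq h t) L (gap / 3) Hfd HR) as [r2 [Hr2 Hw2]]; auto.
    { intros n Hn. rewrite Rabs_right; [apply HLs; auto| apply Rle_ge, HLs; auto]. } lra.
    set (r := Rmin r1 r2). assert (Hr : 0 < r) by (apply Rmin_glb_lt; auto).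
    assert (Hrr1 : r <= r1) by apply Rmin_l. assert (Hrr2 : r <= r2) by apply Rmin_r.
    destruct (Hnb t (r / 2) Ht ltac:(lra)) as [eta [He [He1 [He2 Hq4]]]].
    apply (deriv_zero _ t l eta Hd He). intros u Hu. simpl.
    apply lim_eq. intros d Hd0. set (d' := Rmin d (r / 2)).
    assert (Hd'1 : d' <= d) by apply Rmin_l. assert (Hd'2 : d' <= r / 2) by apply Rmin_r.
    assert (Hd'0 : 0 < d') by (apply Rmin_glb_lt; lra).
    destruct (Qdiff d' (1 / eta) Hd'0) as [k1 Hk1]. destruct (Happ d' 0 Hd'0) as [k2 Hk2].
    set (k := Nat.max k1 k2). destruct (Hk1 k ltac:(lia)) as [Zk A]. destruct (Hk2 k ltac:(lia)) as [_ [_ [B _]]].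
    set (zz := z (phi k)).
    assert (Hzz1 : 1 <= zz * eta). { assert (1 / eta <= zz) by (unfold zz; lra).
      apply (Rmult_le_compat_r eta) in H; [|lra]. replace (1 / eta * eta) with 1 in H by (field; lra). lra. }
    exists (fs (x (phi k)) u j), (fs (x (phi k)) t j).
    pose proof (B u j ltac:(lra) Hj) as B1. pose proof (B t j ltac:(lra) Hj) as B2.
    rewrite Rabs_minus_sym in B1, B2. split; [lra|]. split; [lra|].
    destruct (mw_facts N M sched Rm f (X (phi k)) Hok (HX (phi k))) as
      [sigma [Hsig [HMW [HQpos [_ [_ [_ [_ [_ [_ [HYc [HSc _]]]]]]]]]]]].
    assert (Hz1 : 1 <= zz) by (unfold zz; auto).
    apply (fluid_const T zz (fun tau => dS (X (phi k)) tau j) (fun u => fs (x (phi k)) u j) t eta); auto; try lra.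
    - intros u0 Hu0. destruct (Hfl (phi k) u0 Hu0) as [_ C1]. apply (C1 j Hj).
    - intros tau Htau. apply HSc; auto. intros Hsj.
      assert (Hs : t - 2 * eta <= INR tau / zz <= t + eta).
      { split; apply (Rmult_le_reg_l zz); try lra; replace (zz * (INR tau / zz)) with (INR tau) by (field; lra); lra. }
      set (qb := fq (x (phi k)) (INR tau / zz)).
      assert (Hqb : forall n, (n < N)%nat -> 0 <= qb n /\ Rabs (qb n - fq h t n) <= r).
      { intros n Hn. split. destruct (FF (phi k)) as [C _]. apply C; auto; lra.
        pose proof (Hq4 _ n Hs Hn). pose proof (A (INR tau / zz) n ltac:(lra) Hn). apply abs_le_iff in H, H0. apply abs_le_iff. unfold qb. lra. }
      assert (W1 := Hw1 qb (fun n Hn => let (a, b) := Hqb n Hn in conj a (Rle_trans _ _ _ b Hrr1))).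
      assert (W2 := Hw2 qb (fun n Hn => let (a, b) := Hqb n Hn in conj a (Rle_trans _ _ _ b Hrr2))).
      apply abs_le_iff in W1, W2.
      assert (Hlt : weight N Rm f (sched j) qb < weight N Rm f (sched l') qb) by (unfold gap in *; lra).
      assert (Hmax : forall l0, (l0 < M)%nat -> weight N Rm f (sched l0) (dQ (X (phi k)) tau) <= weight N Rm f (sched j) (dQ (X (phi k)) tau)).
      { intros l0 Hl0. rewrite <- Hsj. apply HMW; auto. }
      pose proof (Hscale (dQ (X (phi k)) tau) (fun n Hn => HQpos tau n Hn) j Hj Hmax (/ zz) ltac:(apply Rlt_le, Rinv_0_lt_compat; lra) l' Hl') as Hsc.
      assert (Eq : forall n, (n < N)%nat -> / zz * dQ (X (phi k)) tau n = qb n).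
      { intros n Hn. rewrite (Q_at_tau N M T (X (phi k)) zz (x (phi k)) (Hfl (phi k)) ltac:(unfold zz; auto) tau n Hn) by nra.
        unfold qb. field. lra. }
      rewrite !(weight_ext N Rm f _ _ qb Eq) in Hsc. lra. }
Qed.

Lemma ev_and : forall {J : Type} (leJ : J -> J -> Prop) A B, Defs.total_order leJ ->
  Defs.eventually leJ A -> Defs.eventually leJ B -> Defs.eventually leJ (fun j => A j /\ B j).
Proof. unfold Defs.total_order, Defs.eventually. intros J leJ A B [_ [_ [Htr Htot]]] [j1 H1] [j2 H2]. destruct (Htot j1 j2).
  exists j2. intros j Hj. split; auto. apply H1. eapply Htr; eauto.
  exists j1. intros j Hj. split; auto. apply H2. eapply Htr; eauto. Qed.

Lemma ev_extract : forall {J : Type} (leJ : J -> J -> Prop) E P,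
  Defs.eventually leJ E -> ~ Defs.eventually leJ P -> exists j, E j /\ ~ P j.
Proof. unfold Defs.eventually. intros J leJ E P [j0 H0] HP. destruct (classic (exists j, E j /\ ~ P j)) as [H|H]; auto.
  exfalso. apply HP. exists j0. intros j Hj. apply NNPP. intros HnP. apply H. exists j. auto. Qed.

Lemma core : forall N M sched Rm f T K lam (J : Type) (eps : J -> R) (lamj : J -> nat -> R) (G : J -> fpath -> R -> Prop),
  network_ok N M sched Rm f -> 0 < T -> (forall n, (n < N)%nat -> 0 <= lam n) ->
  (forall j x z, G j x z ->
     1 <= z /\ exists X, is_MW_sample_path N M sched Rm f X /\ is_fluid_scaling N M T X z x) ->
  (forall j x z, G j x z -> forall t n, 0 <= t <= T -> (n < N)%nat ->
     Rabs (fa x t n - lamj j n * t) <= eps j) ->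
  (forall j x z, G j x z -> forall n, (n < N)%nat -> Rabs (fq x 0 n) <= K) ->
  forall (js : nat -> J) (xs : nat -> fpath) (zs : nat -> R),
  (forall k, G (js k) (xs k) (zs k)) -> (forall k, INR k <= zs k) ->
  (forall k, Rabs (eps (js k)) < 1 / (INR k + 1)) ->
  (forall k n, (n < N)%nat -> Rabs (lamj (js k) n - lam n) < 1 / (INR k + 1)) ->
  exists phi : nat -> nat, (forall k, (k <= phi k)%nat) /\ exists h, is_FMS N M sched Rm f T lam h /\
   (forall n, (n < N)%nat -> Rabs (fq h 0 n) <= K) /\
   forall e, 0 < e -> exists k0, forall k, (k0 <= k)%nat -> dist_le N M T (xs (phi k)) h e.
Proof.
  intros N M sched Rm f T K lam J eps lamj G Hok HT Hlam HG Hfa Hq js xs zs HGk Hz Heps Hlj.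
  destruct (choice_fun (fun k X => is_MW_sample_path N M sched Rm f X /\ is_fluid_scaling N M T X (zs k) (xs k))) as [Xs HXs].
  { intros k. destruct (HG _ _ _ (HGk k)) as [_ H]. exact H. }
  apply (key N M sched Rm f T K lam xs zs Xs Hok HT Hlam).
  - intros k. apply (HG _ _ _ (HGk k)).
  - intros k; apply HXs.
  - intros k; apply HXs.
  - intros B. destruct (nat_above B) as [k0 Hk0]. exists k0. intros k Hk. pose proof (le_INR _ _ Hk). pose proof (Hz k). lra.
  - intros e He. destruct (small_inv (1 + T) e He) as [k0 Hk0]. exists k0. intros k Hk t n Ht Hn.
    pose proof (Hfa _ _ _ (HGk k) t n Ht Hn). pose proof (Heps k). pose proof (Hlj k n Hn).
    assert (Hk1 : 0 < INR k + 1) by (pose proof (pos_INR k); lra).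
    assert (Hk01 : 0 < INR k0 + 1) by (pose proof (pos_INR k0); lra).
    assert (Hmono : 1 / (INR k + 1) <= 1 / (INR k0 + 1)).
    { apply Rmult_le_compat_l; [lra|]. apply Rinv_le_contravar; auto. pose proof (le_INR _ _ Hk). lra. }
    replace (fa (xs k) t n - lam n * t) with ((fa (xs k) t n - lamj (js k) n * t) + (lamj (js k) n - lam n) * t) by ring.
    eapply Rle_trans. apply Rabs_triang. rewrite Rabs_mult, (Rabs_right t) by lra.
    assert (Rabs (lamj (js k) n - lam n) * t <= 1 / (INR k + 1) * T) by (apply Rmult_le_compat; auto using Rabs_pos; lra).
    assert (Rabs (eps (js k)) >= eps (js k)) by (apply Rle_ge, Rle_abs).
    assert ((1 + T) / (INR k0 + 1) = 1 / (INR k0 + 1) + 1 / (INR k0 + 1) * T) by (field; lra).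
    assert (1 / (INR k + 1) * T <= 1 / (INR k0 + 1) * T) by (apply Rmult_le_compat_r; lra).
    lra.
  - intros k n Hn. apply (Hq _ _ _ (HGk k) n Hn).
Qed.

Theorem theorem4p3
  (N M : nat) (sched : nat -> nat -> R) (Rm : nat -> nat -> R) (f : R -> R)
  (T K : R) (lam : nat -> R)
  (J : Type) (leJ : J -> J -> Prop)
  (eps : J -> R) (lamj : J -> nat -> R) (G : J -> fpath -> R -> Prop) :
  network_ok N M sched Rm f ->
  0 < T -> 0 < K ->
  (forall n, (n < N)%nat -> 0 <= lam n) ->
  total_order leJ -> countable_type J ->
  (forall j, 0 <= eps j) ->
  (forall j n, (n < N)%nat -> 0 <= lamj j n) ->
  (forall e, 0 < e -> eventually leJ (fun j => Rabs (eps j) < e)) ->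
  (forall e, 0 < e -> eventually leJ (fun j =>
     forall n, (n < N)%nat -> Rabs (lamj j n - lam n) < e)) ->
  (forall j x z, G j x z ->
     1 <= z /\ exists X, is_MW_sample_path N M sched Rm f X /\
                         is_fluid_scaling N M T X z x) ->
  (forall B, eventually leJ (fun j => forall x z, G j x z -> B <= z)) ->
  (forall j x z, G j x z -> forall t n, 0 <= t <= T -> (n < N)%nat ->
     Rabs (fa x t n - lamj j n * t) <= eps j) ->
  (forall j x z, G j x z -> forall n, (n < N)%nat -> Rabs (fq x 0 n) <= K) ->
  (forall e, 0 < e -> eventually leJ (fun j =>
     forall x z, G j x z -> exists h,
       is_FMS N M sched Rm f T lam h /\
       (forall n, (n < N)%nat -> Rabs (fq h 0 n) <= K) /\
       dist_le N M T x h e))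
  /\
  (forall (q0 : nat -> R) (eps' : J -> R),
     (forall n, (n < N)%nat -> 0 <= q0 n) ->
     (forall e, 0 < e -> eventually leJ (fun j => Rabs (eps' j) < e)) ->
     (forall j x z, G j x z -> forall n, (n < N)%nat ->
        Rabs (fq x 0 n - q0 n) <= eps' j) ->
     forall e, 0 < e -> eventually leJ (fun j =>
       forall x z, G j x z -> exists h,
         is_FMS N M sched Rm f T lam h /\
         (forall n, (n < N)%nat -> fq h 0 n = q0 n) /\
         dist_le N M T x h e)).
Proof.
  intros Hok HT HK Hlam Htot Hcount Heps0 Hlj0 Hepsev Hlamev HG Hzev Hfa Hq.
  set (E := fun (k : nat) j => (Rabs (eps j) < 1 / (INR k + 1) /\
      (forall n, (n < N)%nat -> Rabs (lamj j n - lam n) < 1 / (INR k + 1))) /\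
      (forall x z, G j x z -> INR k <= z)).
  assert (Hk1 : forall k : nat, 0 < 1 / (INR k + 1)) by (intros; apply Rdiv_lt_0_compat; [lra| pose proof (pos_INR k); lra]).
  assert (HE : forall k, Defs.eventually leJ (E k)).
  { intros k. apply ev_and; auto. apply ev_and; auto. }
  split.
  - intros e He. apply NNPP. intros Hne.
    assert (Hex : forall k : nat, exists jxz : J * fpath * R, let '(j, x, z) := jxz in
       E k j /\ G j x z /\ ~ (exists h, is_FMS N M sched Rm f T lam h /\
       (forall n, (n < N)%nat -> Rabs (fq h 0 n) <= K) /\ dist_le N M T x h e)).
    { intros k. destruct (ev_extract leJ (E k) _ (HE k) Hne) as [j [Ej Pj]].
      apply not_all_ex_not in Pj. destruct Pj as [x Pj]. apply not_all_ex_not in Pj. destruct Pj as [z Pj].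
      exists (j, x, z). split; auto. apply imply_to_and in Pj. auto. }
    destruct (choice_fun _ Hex) as [sq Hsq].
    set (js := fun k => fst (fst (sq k))). set (xs := fun k => snd (fst (sq k))). set (zs := fun k => snd (sq k)).
    assert (Hsq' : forall k, E k (js k) /\ G (js k) (xs k) (zs k) /\ ~ (exists h, is_FMS N M sched Rm f T lam h /\
       (forall n, (n < N)%nat -> Rabs (fq h 0 n) <= K) /\ dist_le N M T (xs k) h e)).
    { intros k. specialize (Hsq k). unfold js, xs, zs. destruct (sq k) as [[j x] z]. exact Hsq. }
    assert (C1 : forall k, G (js k) (xs k) (zs k)) by (intros k; apply Hsq').
    assert (C2 : forall k, INR k <= zs k) by (intros k; destruct (Hsq' k) as [[_ Hz] [HGk _]]; apply (Hz _ _ HGk)).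
    assert (C3 : forall k, Rabs (eps (js k)) < 1 / (INR k + 1)) by (intros k; apply (Hsq' k)).
    assert (C4 : forall k n, (n < N)%nat -> Rabs (lamj (js k) n - lam n) < 1 / (INR k + 1)) by (intros k; apply (Hsq' k)).
    destruct (core N M sched Rm f T K lam J eps lamj G Hok HT Hlam HG Hfa Hq js xs zs C1 C2 C3 C4) as [phi [Hphi [h [Hh1 [Hh2 Hh3]]]]].
    destruct (Hh3 e He) as [k0 Hk0]. destruct (Hsq' (phi k0)) as [_ [_ Hbad]]. apply Hbad.
      exists h. refine (conj Hh1 (conj Hh2 _)). apply Hk0. lia.
  - intros q0 eps' Hq0pos Heps' Hdist e He. apply NNPP. intros Hne.
    set (E' := fun k j => E k j /\ Rabs (eps' j) < 1 / (INR k + 1)).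
    assert (HE' : forall k, Defs.eventually leJ (E' k)) by (intros k; apply ev_and; auto).
    assert (Hex : forall k : nat, exists jxz : J * fpath * R, let '(j, x, z) := jxz in
       E' k j /\ G j x z /\ ~ (exists h, is_FMS N M sched Rm f T lam h /\
       (forall n, (n < N)%nat -> fq h 0 n = q0 n) /\ dist_le N M T x h e)).
    { intros k. destruct (ev_extract leJ (E' k) _ (HE' k) Hne) as [j [Ej Pj]].
      apply not_all_ex_not in Pj. destruct Pj as [x Pj]. apply not_all_ex_not in Pj. destruct Pj as [z Pj].
      exists (j, x, z). split; auto. apply imply_to_and in Pj. auto. }
    destruct (choice_fun _ Hex) as [sq Hsq].
    set (js := fun k => fst (fst (sq k))). set (xs := fun k => snd (fst (sq k))). set (zs := fun k => snd (sq k)).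
    assert (Hsq' : forall k, E' k (js k) /\ G (js k) (xs k) (zs k) /\ ~ (exists h, is_FMS N M sched Rm f T lam h /\
       (forall n, (n < N)%nat -> fq h 0 n = q0 n) /\ dist_le N M T (xs k) h e)).
    { intros k. specialize (Hsq k). unfold js, xs, zs. destruct (sq k) as [[j x] z]. exact Hsq. }
    assert (C1 : forall k, G (js k) (xs k) (zs k)) by (intros k; apply Hsq').
    assert (C2 : forall k, INR k <= zs k) by (intros k; destruct (Hsq' k) as [[[_ Hz] _] [HGk _]]; apply (Hz _ _ HGk)).
    assert (C3 : forall k, Rabs (eps (js k)) < 1 / (INR k + 1)) by (intros k; apply (Hsq' k)).
    assert (C4 : forall k n, (n < N)%nat -> Rabs (lamj (js k) n - lam n) < 1 / (INR k + 1)) by (intros k; apply (Hsq' k)).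
    destruct (core N M sched Rm f T K lam J eps lamj G Hok HT Hlam HG Hfa Hq js xs zs C1 C2 C3 C4) as [phi [Hphi [h [Hh1 [Hh2 Hh3]]]]].
    assert (Hh0 : forall n, (n < N)%nat -> fq h 0 n = q0 n).
      { intros n Hn. apply lim_eq. intros d Hd. destruct (Hh3 d Hd) as [k0 Hk0]. destruct (small_inv 1 d Hd) as [m Hm].
        set (k := Nat.max k0 m). set (k' := phi k).
        exists (fq (xs k') 0 n), (fq (xs k') 0 n). split; [|split; auto].
        - destruct (Hk0 k ltac:(lia) 0 ltac:(lra)) as [A _]. destruct (A n Hn) as [A1 _]. rewrite Rabs_minus_sym. auto.
        - destruct (Hsq' k') as [[_ He'] [HGk _]]. pose proof (Hdist _ _ _ HGk n Hn). rewrite Rabs_minus_sym.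
          assert (Hmk : (m <= k')%nat) by (pose proof (Hphi k); unfold k', k in *; lia).
          assert (1 / (INR k' + 1) <= 1 / (INR m + 1)).
          { apply Rmult_le_compat_l; [lra|]. apply Rinv_le_contravar. pose proof (pos_INR m); lra. pose proof (le_INR _ _ Hmk); lra. }
          pose proof (Rle_abs (eps' (js k'))). lra. }
      destruct (Hh3 e He) as [k0 Hk0]. destruct (Hsq' (phi k0)) as [_ [_ Hbad]]. apply Hbad.
      exists h. refine (conj Hh1 (conj Hh0 _)). apply Hk0. lia.
Qed.
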